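(* Let $\Gamma$ be a connected quartic graph on $n\ge 11$ vertices whose algebraic connectivity $\mu=\mu(\Gamma)$ is minimum among all connected quartic graphs on $n$ vertices. Then: if $n\ge 11$, $\mu<0.355$; if $n\ge13$, $\mu<0.268$; if $n\ge18$, $\mu<0.129$; if $n\ge21$, $\mu<0.091$; if $n\ge 26$, $\mu<0.059$.
   Context: Quartic means 4-regular; graphs are finite and simple. The algebraic connectivity is the second smallest eigenvalue of the Laplacian $L=\Delta-A$. *)

(* Defs.v *)
From HB Require Import structures.
From mathcomp Require Import all_boot all_order all_algebra.
Set Implicit Arguments. Unset Strict Implicit. Unset Printing Implicit Defensive.
Import Order.TTheory GRing.Theory Num.Theory.
Local Open Scope ring_scope.

Definition simple_graph (n : nat) (e : rel 'I_n) : Prop :=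
  irreflexive e /\ symmetric e.

Definition degree (n : nat) (e : rel 'I_n) (i : 'I_n) : nat :=
  #|[set j | e i j]|.

Definition quartic (n : nat) (e : rel 'I_n) : Prop :=
  forall i : 'I_n, degree e i = 4%N.

Definition connected_graph (n : nat) (e : rel 'I_n) : Prop :=
  forall i j : 'I_n, connect e i j.

Definition connected_quartic (n : nat) (e : rel 'I_n) : Prop :=
  [/\ simple_graph e, quartic e & connected_graph e].

Definition laplacian (R : nzRingType) (n : nat) (e : rel 'I_n) : 'M[R]_n :=
  \matrix_(i, j) ((if i == j then (degree e i)%:R else 0) - (e i j)%:R).

(* s is the list of eigenvalues of A, with multiplicities, in
   nondecreasing order: the characteristic polynomial factors as
   prod_(x <- s) (X - x). *)
Definition sorted_spectrum (R : rcfType) (n : nat) (A : 'M[R]_n) (s : seq R)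
  : Prop :=
  [/\ size s = n, sorted <=%R s & char_poly A = \prod_(x <- s) ('X - x%:P)].

(* mu is the algebraic connectivity (second smallest Laplacian eigenvalue,
   counted with multiplicity) of the graph e. *)
Definition alg_conn (R : rcfType) (n : nat) (e : rel 'I_n) (mu : R) : Prop :=
  exists s : seq R, sorted_spectrum (laplacian R e) s /\ mu = nth 0 s 1.

(* Main.v *)
Require Import Defs.
From HB Require Import structures.
From mathcomp Require Import all_boot all_order all_algebra.
From mathcomp Require Import spectral sesquilinear complex.
From mathcomp Require Import zify ssrZ ring.
From Stdlib Require ZArith.
Import Order.TTheory GRing.Theory Num.Theory.
Local Open Scope ring_scope.
Set Implicit Arguments. Unset Strict Implicit. Unset Printing Implicit Defensive.
Notation Z := BinNums.Z.
Module Z := BinInt.Z.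

Lemma char_poly_conj (F : fieldType) n (P D : 'M[F]_n) : P \in unitmx ->
  char_poly (invmx P *m D *m P) = char_poly D.
Proof.
move=> Pu; rewrite /char_poly.
have -> : char_poly_mx (invmx P *m D *m P) =
   map_mx polyC (invmx P) *m char_poly_mx D *m map_mx polyC P.
  rewrite /char_poly_mx mulmxBr mulmxBl -!map_mxM.
  by rewrite mul_mx_scalar -scalemxAl -map_mxM mulVmx // map_mx1 scalemx1.
rewrite !det_mulmx !det_map_mx /= mulrAC -rmorphM -det_mulmx.
by rewrite mulVmx // det1 rmorph1 mul1r.
Qed.

Section Spec.
Variable R : rcfType.
Local Notation C := (complex R).
Local Notation f := (real_complex R).
Variable n : nat.
Variable L : 'M[R]_n.
Hypothesis symL : L^T = L.

Let A : 'M[C]_n := map_mx f L.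

Lemma A_herm : A \is hermsymmx.
Proof.
apply: realsym_hermsym.
  apply/is_hermitianmxP; rewrite expr0 scale1r map_mx_id // /A.
  by rewrite map_trmx symL.
by apply/mxOverP => i j; rewrite mxE; apply/complex_realP; eexists.
Qed.

Let P := spectralmx A.
Let d := spectral_diag A.

Lemma A_decomp : A = invmx P *m diag_mx d *m P.
Proof. exact/orthomx_spectralP/hermitian_normalmx/A_herm. Qed.

Lemma d_real k : d 0 k = f (complex.Re (d 0 k)).
Proof.
have := hermitian_spectral_diag_real A_herm => /mxOverP /(_ 0 k) dr.
by rewrite RRe_real.
Qed.

Lemma cpA : char_poly A = \prod_(i < n) ('X - (d 0 i)%:P).
Proof.
rewrite A_decomp char_poly_conj ?spectral_unit // char_poly_trig ?diag_mx_is_trig //.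
by apply: eq_bigr => i _; rewrite mxE eqxx mulr1n.
Qed.


Lemma spec_exists : exists s : seq R,
  [/\ size s = n, sorted <=%R s & char_poly L = \prod_(x <- s) ('X - x%:P)].
Proof.
exists (sort <=%R [seq complex.Re (d 0 i) | i <- enum 'I_n]); split.
- by rewrite size_sort size_map size_enum_ord.
- exact/sort_sorted/le_total.
apply: (map_poly_inj f); rewrite map_char_poly -/A cpA map_prod_XsubC.
rewrite (perm_big _ (permEl (perm_sort _ _))) big_map big_enum /=.
by apply: eq_bigr => i _; rewrite -d_real.
Qed.

Lemma count_two (T : finType) (U : Type) (F : T -> U) (p : pred U) k k' :
  k != k' -> p (F k) -> p (F k') ->
  (1 < count p [seq F i | i <- enum T])%N.
Proof.
move=> kk' pk pk'; rewrite count_map -size_filter.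
have := @uniq_leq_size _ [:: k; k'] (filter (preim F p) (enum T)).
rewrite /= inE kk' => /(_ isT); apply.
by move=> z; rewrite !inE mem_filter mem_enum andbT => /orP[] /eqP ->.
Qed.

Hypothesis L1 : L *m (const_mx 1 : 'cV[R]_n) = 0.

Local Open Scope sesquilinear_scope.

Lemma conjf (m p : nat) (M : 'M[R]_(m, p)) : (map_mx f M)^t* = map_mx f M^T.
Proof.
apply/matrixP => i j; rewrite !mxE; apply/CrealP/complex_realP; eexists; reflexivity.
Qed.

Lemma trC_mul (m p q : nat) (M : 'M[C]_(m, p)) (N : 'M[C]_(p, q)) :
  (M *m N)^t* = N^t* *m M^t*.
Proof. by rewrite trmx_mul map_mxM. Qed.

Lemma rayleigh (s : seq R) (x : 'rV[R]_n) :
  size s = n -> sorted <=%R s -> char_poly L = \prod_(y <- s) ('X - y%:P) ->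
  0 < s`_1 -> x *m (const_mx 1 : 'cV[R]_n) = 0 ->
  s`_1 * (x *m x^T) 0 0 <= (x *m L *m x^T) 0 0.
Proof.
move=> sz srt cp s1pos x1.
have pe : perm_eq (map f s) [seq d 0 i | i <- enum 'I_n].
  have : \prod_(y <- map f s) ('X - y%:P) = \prod_(y <- [seq d 0 i | i <- enum 'I_n]) ('X - y%:P).
    rewrite [RHS]big_map big_enum /= -cpA /A -map_char_poly cp map_prod_XsubC.
    by rewrite big_map.
  move=> eqp; apply/allP => z _; apply/eqP.
  by rewrite -!mu_prod_XsubC eqp.
have cnt : (count (fun z : C => (complex.Re z < s`_1)%R) (map f s) <= 1)%N.
  rewrite count_map.
  case: s sz srt s1pos {cp pe} => [|a [|b t]] //=; first by rewrite ltxx.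
  move=> _ /andP[_ pt] _; rewrite ltxx /= add0n.
  have /allP al := order_path_min le_trans pt.
  rewrite (eq_in_count (a2 := pred0)) ?count_pred0 ?addn0 ?leq_b1 //.
  by move=> y /al /= hb; rewrite ltNge hb.
have uniqk : forall k k', complex.Re (d 0 k) < s`_1 -> complex.Re (d 0 k') < s`_1 -> k = k'.
  move=> k k' hk hk'; apply/eqP; apply: contraT => kk'.
  have := count_two (F := fun i => d 0 i) (p := fun z : C => (complex.Re z < s`_1)%R) kk' hk hk'.
  by rewrite -(permP pe) ltnNge cnt.
have Pu : P \is unitarymx := spectral_unitarymx A.
have AP : A = P^t* *m diag_mx d *m P by rewrite -invmx_unitary // A_decomp.
pose X := map_mx f x.
pose U := map_mx f (const_mx 1 : 'rV[R]_n).
pose Y := X *m P^t*. pose Z := U *m P^t*.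
have F1 : X *m A *m X^t* = Y *m diag_mx d *m Y^t*.
  by rewrite AP /Y trC_mul trmxCK !mulmxA.
have F2 : X *m X^t* = Y *m Y^t*.
  by rewrite /Y trC_mul trmxCK mulmxA mulmxKtV.
have UA : U *m A = 0.
  have h : (const_mx 1 : 'rV[R]_n) *m L = 0.
    by apply: trmx_inj; rewrite trmx_mul symL trmx_const L1 trmx0.
  by rewrite /U /A -map_mxM h map_mx0.
have F3 : Z *m diag_mx d = 0.
  have : U *m A *m P^t* = 0 by rewrite UA mul0mx.
  by rewrite AP !mulmxA mulmxtVK.
have F4 : Y *m Z^t* = 0.
  rewrite /Y /Z trC_mul trmxCK mulmxA mulmxKtV // /U /X conjf -map_mxM.
  by rewrite trmx_const x1 map_mx0.
have E1 : (Y *m diag_mx d *m Y^t*) 0 0 = \sum_k Y 0 k * d 0 k * (Y 0 k)^*.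
  by rewrite mul_mx_diag mxE; apply: eq_bigr => k _; rewrite !mxE.
have E2 : (Y *m Y^t*) 0 0 = \sum_k Y 0 k * (Y 0 k)^*.
  by rewrite mxE; apply: eq_bigr => k _; rewrite !mxE.
have E3 : forall k, Z 0 k * d 0 k = 0.
  by move=> k; move/matrixP: F3 => /(_ 0 k); rewrite mul_mx_diag !mxE.
have E4 : \sum_k Y 0 k * (Z 0 k)^* = 0.
  transitivity ((Y *m Z^t*) 0 0); last by rewrite F4 mxE.
  by rewrite mxE; apply: eq_bigr => k _; rewrite !mxE.
have key : forall k, Y 0 k = 0 \/ s`_1 <= complex.Re (d 0 k).
  move=> k; case: (ltP (complex.Re (d 0 k)) s`_1) => hk; last by right.
  left.
  have Zo : forall k', k' != k -> Z 0 k' = 0.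
    move=> k' kk'; have : ~~ (complex.Re (d 0 k') < s`_1).
      by apply/negP => /uniqk /(_ hk) /eqP; rewrite (negbTE kk').
    rewrite -leNgt => hk'.
    have dk' : d 0 k' != 0.
      rewrite d_real; apply/negP => /eqP /(congr1 (@complex.Re R)) /= h0.
      by move: hk'; rewrite h0 leNgt s1pos.
    by have := E3 k'; move/eqP; rewrite mulf_eq0 (negbTE dk') orbF => /eqP.
  have : Y 0 k * (Z 0 k)^* = 0.
    rewrite -E4 (bigD1 k) //= big1 ?addr0 // => k' kk'.
    by rewrite Zo // conjC0 mulr0.
  move/eqP; rewrite mulf_eq0 conjC_eq0 => /orP[/eqP //|/eqP Zk0].
  exfalso.
  have Z0 : Z = 0.
    apply/rowP => j; rewrite [RHS]mxE; case: (eqVneq j k) => [->//|jk].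
    exact: Zo.
  have : U 0 k = 0 by rewrite -(mulmxKtV U Pu) // -/Z Z0 !mul0mx mxE.
  by rewrite /U !mxE rmorph1 => /eqP; rewrite oner_eq0.
have ineq : f s`_1 * (Y *m Y^t*) 0 0 <= (Y *m diag_mx d *m Y^t*) 0 0.
  rewrite E1 E2 mulr_sumr; apply: ler_sum => k _.
  case: (key k) => [->|hk]; first by rewrite !mul0r mulr0.
  rewrite [X in X <= _]mulrC [X in _ <= X]mulrAC.
  apply: ler_wpM2l; first exact: mul_conjC_ge0.
  by rewrite d_real lecR.
move: ineq; rewrite -F1 -F2 /X /A conjf -!map_mxM !mxE -rmorphM lecR //.
Qed.

End Spec.

Definition gr (n : nat) (nb : nat -> seq nat) : rel 'I_n :=
  fun i j => val j \in nb (val i).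

Definition nb_ok (n : nat) (nb : nat -> seq nat) : Prop :=
  [/\ forall i, (i < n)%N ->
        [/\ uniq (nb i), size (nb i) = 4%N, all (fun j => j < n)%N (nb i)
          & i \notin nb i],
      forall i j, (i < n)%N -> (j < n)%N -> j \in nb i -> i \in nb j
    & forall i, (0 < i < n)%N -> has (fun j => j < i)%N (nb i)].

Lemma big_ord_mem (R : Type) (idx : R) (op : SemiGroup.com_law R) n (s : seq nat)
  (F : nat -> R) : uniq s -> all (fun j => j < n)%N s ->
  \big[op/idx]_(j < n | val j \in s) F j = \big[op/idx]_(j <- s) F j.
Proof.
move=> us als; rewrite -(big_mkord (fun j => j \in s)) -big_filter.
apply: perm_big; apply: uniq_perm.
- exact/filter_uniq/iota_uniq.
- exact: us.
move=> j; rewrite mem_filter mem_iota add0n /=.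
by case js: (j \in s) => //=; rewrite subn0; move/allP: als => /(_ j js).
Qed.

Section G.
Variables (n : nat) (nb : nat -> seq nat).
Hypothesis ok : nb_ok n nb.
Local Notation e := (@gr n nb).

Lemma gr_sym : symmetric e.
Proof.
case: ok => _ hs _ i j; rewrite /gr.
by apply/idP/idP => h; [exact: (hs _ _ (ltn_ord i) (ltn_ord j) h) | exact: (hs _ _ (ltn_ord j) (ltn_ord i) h)].
Qed.

Lemma gr_irr : irreflexive e.
Proof. by case: ok => h _ _ i; rewrite /gr; case: (h _ (ltn_ord i)) => _ _ _ /negbTE. Qed.

Lemma gr_deg (i : 'I_n) : degree e i = 4%N.
Proof.
case: ok => /(_ _ (ltn_ord i)) [u sz al _] _ _.
rewrite /degree cardsE -sum1_card /=.
by rewrite (@big_ord_mem _ 0%N addn _ _ (fun=> 1%N) u al) sum1_size sz.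
Qed.

Lemma gr_conn : connected_graph e.
Proof.
case: ok => _ _ hc.
have c0 : forall k (hk : (k < n)%N), forall h0 : (0 < n)%N,
    connect e (Ordinal h0) (Ordinal hk).
  elim/ltn_ind => k IH hk h0.
  case: k => [|k] in IH hk *; first by rewrite (bool_irrelevance hk h0) connect0.
  have /hasP [j jnb jk] := hc k.+1 hk.
  have jn : (j < n)%N := ltn_trans jk hk.
  apply: connect_trans (IH j jk jn h0) _.
  apply: connect1; rewrite (gr_sym _ _) /gr /=. done.
move=> i j; have h0 : (0 < n)%N by apply: leq_ltn_trans (ltn_ord i).
have -> : i = Ordinal (ltn_ord i) by apply: val_inj.
have -> : j = Ordinal (ltn_ord j) by apply: val_inj.
apply: connect_trans (c0 _ _ h0); rewrite (sym_connect_sym gr_sym); exact: c0.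
Qed.

Lemma gr_cq : connected_quartic e.
Proof. split; [split; [exact: gr_irr | exact: gr_sym] | exact: gr_deg | exact: gr_conn]. Qed.

Variable R : rcfType.
Local Notation L := (laplacian R e).

Lemma lap_row (xv : nat -> R) (i : 'I_n) :
  \sum_(j < n) L i j * xv j = 4%:R * xv i - \sum_(j <- nb i) xv j.
Proof.
case: ok => /(_ _ (ltn_ord i)) [u sz al _] _ _.
rewrite -(@big_ord_mem R 0 +%R n (nb i) xv u al) (big_mkcond (fun j : 'I_n => val j \in nb i)).
rewrite (eq_bigr (fun j : 'I_n => ((if i == j then (degree e i)%:R else 0) * xv j
    - (e i j)%:R * xv j))); last by move=> j _; rewrite /laplacian mxE mulrBl.
rewrite sumrB; congr (_ - _).
  rewrite (bigD1 i) //= big1 ?addr0; last first.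
    by move=> j /negbTE ji; rewrite eq_sym ji mul0r.
  by rewrite eqxx gr_deg.
by apply: eq_bigr => j _; rewrite /gr; case: (val j \in nb i); rewrite ?mul1r ?mul0r.
Qed.

Lemma lap_sym : L^T = L.
Proof.
apply/matrixP => i j; rewrite !mxE gr_sym eq_sym.
by case: eqP => [->|].
Qed.

Lemma lap_one : L *m (const_mx 1 : 'cV[R]_n) = 0.
Proof.
apply/colP => i; rewrite mxE [RHS]mxE.
rewrite (eq_bigr (fun j : 'I_n => L i j * (fun=> (1:R)) (val j))); last first.
  by move=> j _; rewrite [const_mx _ _ _]mxE.
rewrite (lap_row (fun=> 1)).
case: ok => /(_ _ (ltn_ord i)) [_ sz _ _] _ _.
by rewrite big_const_seq count_predT sz mulr1 iter_addr addr0 subrr.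
Qed.

Lemma lap_qf (xv : nat -> R) :
  let x := \row_(i < n) xv i in
  (x *m L *m x^T) 0 0 = \sum_(i < n) xv i * (4%:R * xv i - \sum_(j <- nb i) xv j).
Proof.
move=> x; rewrite -mulmxA mxE; apply: eq_bigr => i _.
rewrite !mxE -lap_row; congr (_ * _).
by apply: eq_bigr => j _; rewrite !mxE.
Qed.

Lemma lap_xx (xv : nat -> R) :
  let x := \row_(i < n) xv i in
  (x *m x^T) 0 0 = \sum_(i < n) xv i ^+ 2.
Proof. by move=> x; rewrite mxE; apply: eq_bigr => i _; rewrite !mxE expr2. Qed.

Lemma lap_x1 (xv : nat -> R) :
  let x := \row_(i < n) xv i in
  \sum_(i < n) xv i = 0 -> x *m (const_mx 1 : 'cV[R]_n) = 0.
Proof.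
move=> x h; apply/matrixP => i j; rewrite !ord1 !mxE -[RHS]h.
by apply: eq_bigr => k _; rewrite !mxE mulr1.
Qed.

End G.

Lemma reduce (R : rcfType) n (mu : R) (nb : nat -> seq nat) (xv : nat -> R) (b : R) :
  (forall (e' : rel 'I_n) (mu' : R), connected_quartic e' -> alg_conn e' mu' -> mu <= mu') ->
  nb_ok n nb -> \sum_(i < n) xv i = 0 -> 0 < \sum_(i < n) xv i ^+ 2 -> 0 < b ->
  \sum_(i < n) xv i * (4%:R * xv i - \sum_(j <- nb i) xv j) < b * \sum_(i < n) xv i ^+ 2 ->
  mu < b.
Proof.
move=> hmin ok s0 Spos bpos hQ.
have [s [sz srt cp]] := spec_exists (lap_sym ok R).
have hmu : mu <= s`_1.
  by apply: hmin (gr_cq ok) _; exists s; split.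
case: (leP s`_1 0) => [s1le|s1pos].
  by apply: le_lt_trans hmu (le_lt_trans s1le bpos).
have := rayleigh (lap_sym ok R) (lap_one ok R) (x := \row_(i < n) xv i) sz srt cp s1pos.
rewrite lap_x1 // lap_qf // lap_xx => /(_ erefl) h.
apply: le_lt_trans hmu _.
have : s`_1 * \sum_(i < n) xv i ^+ 2 < b * \sum_(i < n) xv i ^+ 2 := le_lt_trans h hQ.
by rewrite ltr_pM2r.
Qed.

Definition QZ n (nb : nat -> seq nat) (xz : nat -> Z) : Z :=
  \sum_(0 <= i < n) xz i * (4 * xz i - \sum_(j <- nb i) xz j).
Definition SZ n (xz : nat -> Z) : Z := \sum_(0 <= i < n) xz i * xz i.
Definition TZ n (xz : nat -> Z) : Z := \sum_(0 <= i < n) xz i.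

Section RZ.
Variable R : rcfType.
Definition phi (z : Z) : R := (int_of_Z z)%:~R.
Lemma phiD a b : phi (a + b) = phi a + phi b.
Proof. by rewrite /phi !rmorphD. Qed.
Lemma phiM a b : phi (a * b) = phi a * phi b.
Proof. by rewrite /phi !rmorphM. Qed.
Lemma phiB a b : phi (a - b) = phi a - phi b.
Proof. by rewrite /phi !rmorphB. Qed.
Lemma phi_sum (I : Type) (r : seq I) (F : I -> Z) :
  phi (\sum_(i <- r) F i) = \sum_(i <- r) phi (F i).
Proof. by rewrite /phi !rmorph_sum. Qed.
Lemma phi_nat k : phi k%:R = k%:R.
Proof. by rewrite /phi !rmorph_nat. Qed.
Lemma phi_lt a b : Z.ltb a b -> phi a < phi b.
Proof. by move=> h; rewrite /phi ltr_int; lia. Qed.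
Lemma phi0 : phi 0 = 0.
Proof. by rewrite /phi rmorph0. Qed.
End RZ.

Lemma reduceZ (R : rcfType) n (mu : R) (nb : nat -> seq nat) (xz : nat -> Z) (bn : nat) :
  (forall (e' : rel 'I_n) (mu' : R), connected_quartic e' -> alg_conn e' mu' -> mu <= mu') ->
  nb_ok n nb -> TZ n xz = 0%R -> Z.ltb 0 (SZ n xz) -> (0 < bn)%N ->
  Z.ltb (QZ n nb xz * 1000%:R)%R (SZ n xz * bn%:R)%R ->
  mu < bn%:R / 1000%:R.
Proof.
move=> hmin ok T0 S0 bn0 hQ.
have bpos : (0 : R) < bn%:R / 1000%:R by rewrite divr_gt0 // ltr0n.
apply: (reduce (xv := fun i => phi R (xz i)) hmin ok) => //.
- by rewrite -(big_mkord xpredT (fun i => phi R (xz i))) -phi_sum -/(TZ n xz) T0 phi0.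
- rewrite -(big_mkord xpredT (fun i => phi R (xz i) ^+ 2)).
  under eq_bigr => i _ do rewrite expr2 -phiM.
  by rewrite -phi_sum -/(SZ n xz) -(phi0 R); apply: phi_lt.
rewrite -(big_mkord xpredT (fun i => phi R (xz i) ^+ 2)).
under eq_bigr => i _ do rewrite expr2 -phiM.
rewrite -(big_mkord xpredT (fun i => phi R (xz i) * (4%:R * phi R (xz i) - \sum_(j <- nb i) phi R (xz j)))).
under eq_bigr => i _ do rewrite -phi_sum -(phi_nat R 4) -phiM -phiB -phiM.
rewrite -!phi_sum -/(SZ n xz) -/(QZ n nb xz).
rewrite mulrC mulrA ltr_pdivlMr ?ltr0n // -[1000%:R](phi_nat R) -[bn%:R](phi_nat R).
rewrite -!phiM; apply: phi_lt.
exact: hQ.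
Qed.

Definition nb_of (tbl : seq (seq nat)) : nat -> seq nat := fun i => nth [::] tbl i.
Definition x_of (xs : seq Z) : nat -> Z := fun i => nth 0%R xs i.

Definition nb_okb (n : nat) (tbl : seq (seq nat)) : bool :=
  [&& all (fun i => let s := nth [::] tbl i in
         [&& uniq s, size s == 4%N, all (fun j => j < n)%N s & i \notin s]) (iota 0 n),
      all (fun i => all (fun j => i \in nth [::] tbl j) (nth [::] tbl i)) (iota 0 n)
    & all (fun i => has (fun j => j < i)%N (nth [::] tbl i)) (iota 1 n.-1)].

Lemma nb_okbP n tbl : nb_okb n tbl -> nb_ok n (nb_of tbl).
Proof.
case/and3P => /allP h1 /allP h2 /allP h3; split.
- move=> i lin; have := h1 i; rewrite mem_iota add0n lin => /(_ isT) /and4P[a b c d].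
  by split => //; apply/eqP.
- move=> i j lin ljn jin; have := h2 i; rewrite mem_iota add0n lin => /(_ isT) /allP.
  by apply.
- move=> i /andP[i0 lin]; apply: h3; rewrite mem_iota i0 /=.
  by move: lin; case: (n) => // n'; rewrite add1n.
Qed.

Definition check (n : nat) (tbl : seq (seq nat)) (xs : seq Z) (bn : nat) : bool :=
  [&& nb_okb n tbl, TZ n (x_of xs) == 0%R, Z.ltb 0 (SZ n (x_of xs)), (0 < bn)%N &
      Z.ltb (QZ n (nb_of tbl) (x_of xs) * 1000%:R)%R (SZ n (x_of xs) * bn%:R)%R].

Lemma concrete (R : rcfType) n (mu : R) tbl xs bn :
  (forall (e' : rel 'I_n) (mu' : R), connected_quartic e' -> alg_conn e' mu' -> mu <= mu') ->
  check n tbl xs bn -> mu < bn%:R / 1000%:R.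
Proof.
move=> hmin /and5P[ok /eqP t0 s0 b0 q].
exact: (reduceZ hmin (nb_okbP ok) t0 s0 b0 q).
Qed.


Definition tblL : seq (seq nat) :=
  [:: [:: 1;2;3;5]; [:: 0;2;3;4]; [:: 0;1;3;4]; [:: 0;1;2;4]; [:: 1;2;3;5]; [:: 0;4;6;7];
      [:: 5;7;8;9]; [:: 5;6;8;9]; [:: 6;7;9;10]; [:: 6;7;8;10]; [:: 8;9;11;12];
      [:: 10;12;13;14]; [:: 10;11;13;14]; [:: 11;12;14;16]; [:: 11;12;13;15];
      [:: 14;16;17;18]; [:: 13;15;17;19]; [:: 15;16;18;20]].

Definition nbI (i : nat) : seq nat :=
  if (i < 18)%N then nth [::] tblL i else [:: i - 3; i - 1; i + 1; i + 3]%N.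

Definition nbG (n : nat) (i : nat) : seq nat :=
  if (i < n - i)%N then nbI i else [seq (n.-1 - j)%N | j <- nbI (n.-1 - i)].

Lemma nbI_mid i : (18 <= i)%N -> nbI i = [:: i - 3; i - 1; i + 1; i + 3]%N.
Proof. by move=> hi; rewrite /nbI ltnNge hi. Qed.

Definition smallI (P : nat -> bool) := all P (iota 0 21).

Lemma smallP (P : nat -> bool) i : smallI P -> (i <= 20)%N -> P i.
Proof. by move=> /allP h hi; apply: h; rewrite mem_iota add0n ltnS hi. Qed.

Lemma I1 i : [&& uniq (nbI i), size (nbI i) == 4%N & i \notin nbI i].
Proof.
case: (leqP i 20) => hi.
  by apply: (smallP (P := fun i => [&& uniq (nbI i), size (nbI i) == 4%N & i \notin nbI i])) hi.
rewrite nbI_mid; last by lia.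
rewrite /= !inE; lia.
Qed.

Lemma I2 i j : j \in nbI i -> i \in nbI j.
Proof.
case: (leqP i 20) => hi.
  have /allP := smallP (P := fun i => all (fun j => i \in nbI j) (nbI i)) (i := i) isT hi.
  by apply.
rewrite nbI_mid ?inE; last by lia.
move=> hj; rewrite nbI_mid ?inE; lia.
Qed.

Lemma I3 i : (i.+1 \in nbI i) && ((0 < i)%N ==> (i.-1 \in nbI i)).
Proof.
case: (leqP i 20) => hi.
  by apply: (smallP (P := fun i => (i.+1 \in nbI i) && ((0 < i)%N ==> (i.-1 \in nbI i)))) hi.
rewrite nbI_mid; last by lia.
rewrite !inE; lia.
Qed.

Lemma I5 i j : j \in nbI i -> (j <= i + 5)%N.
Proof.
case: (leqP i 20) => hi.
  have /allP := smallP (P := fun i => all (fun j => j <= i + 5)%N (nbI i)) (i := i) isT hi.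
  by apply.
rewrite nbI_mid ?inE; last by lia.
lia.
Qed.

Lemma nbG_ok n : (50 <= n)%N -> nb_ok n (nbG n).
Proof.
move=> n50; split.
- move=> i lin; rewrite /nbG; case: ltnP => hi.
    case/and3P: (I1 i) => u /eqP sz ni; split => //.
    by apply/allP => j /I5; lia.
  set m := (n.-1 - i)%N.
  have mi : (m <= n./2)%N by lia.
  case/and3P: (I1 m) => u /eqP sz ni; split.
  + rewrite map_inj_in_uniq // => a b /I5 ha /I5 hb; lia.
  + by rewrite size_map.
  + by apply/allP => j /mapP [k _ ->]; lia.
  apply/mapP => [[k hk ik]]; move/negP: ni; apply.
  have km : k = m by move/I5: hk; lia.
  by rewrite -[X in X \in _]km.
- move=> i j lin ljn; rewrite /nbG.
  case: (ltnP i (n - i)) => hi; case: (ltnP j (n - j)) => hj.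
  + exact: I2.
  + move=> hji; have := I5 hji => ji.
    move: hji; rewrite nbI_mid; last by lia.
    rewrite !inE => hji.
    rewrite nbI_mid; last by lia.
    rewrite /= !inE; lia.
  + case/mapP => k hk jk.
    have := I5 hk => km.
    move: hk; rewrite nbI_mid; last by lia.
    rewrite !inE => hk.
    rewrite nbI_mid; last by lia.
    rewrite !inE; lia.
  + case/mapP => k hk jk.
    have := I5 hk => km.
    rewrite (_ : (n.-1 - j = k)%N); last by lia.
    apply/mapP; exists (n.-1 - i)%N; first exact: I2.
    lia.
- move=> i /andP[i0 lin]; rewrite /nbG; case: ltnP => hi.
    apply/hasP; exists i.-1; last by lia.
    by case/andP: (I3 i) => _ /implyP; apply.
  apply/hasP; exists (n.-1 - (n.-1 - i).+1)%N; last by lia.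
  by apply: map_f; case/andP: (I3 (n.-1 - i)%N).
Qed.

Definition xsL : seq Z := [:: 98; 100; 100; 100; 98; 88; 76; 76; 68; 68; 50; 31; 31; 21; 21].
Definition xI (i : nat) : Z := nth 0 xsL i.
Definition xG (n : nat) (i : nat) : Z := if (i < n - i)%N then xI i else - xI (n.-1 - i).
Definition TL (i : nat) : Z := xI i * (4 * xI i - \sum_(j <- nbI i) xI j).

Lemma xI0 i : (15 <= i)%N -> xI i = 0.
Proof. by move=> hi; rewrite /xI nth_default. Qed.

Lemma TL0 i : (15 <= i)%N -> TL i = 0.
Proof. by move=> hi; rewrite /TL xI0 // mul0r. Qed.

Lemma sum_mirror (F1 F2 : nat -> Z) n : (30 <= n)%N ->
  (forall i, (15 <= i)%N -> F1 i = 0) -> (forall i, (15 <= i)%N -> F2 i = 0) ->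
  \sum_(0 <= i < n) (if (i < n - i)%N then F1 i else F2 (n.-1 - i)%N) =
  \sum_(0 <= i < 15) F1 i + \sum_(0 <= i < 15) F2 i.
Proof.
move=> n30 h1 h2.
rewrite (@big_cat_nat _ _ _ 15 0 n) //=; last by lia.
rewrite (@big_cat_nat _ _ _ (n - 15) 15 n) //=; [|lia|lia].
rewrite [X in _ + (X + _)]big1_seq ?add0r; last first.
  move=> i /andP[_]; rewrite mem_index_iota => /andP[a b].
  by case: ltnP => _; [apply: h1 | apply: h2]; lia.
congr (_ + _).
  by apply: eq_big_nat => i /andP[_ hi]; rewrite ifT //; lia.
rewrite -[(n - 15)%N in X in X = _]add0n big_addn.
rewrite (_ : (n - (n - 15))%N = 15); last by lia.
rewrite [RHS]big_nat_rev /=.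
apply: eq_big_nat => i /andP[_ hi]; rewrite ifF; last by lia.
congr F2; lia.
Qed.

Lemma termQ n i : (50 <= n)%N -> (i < n)%N ->
  xG n i * (4 * xG n i - \sum_(j <- nbG n i) xG n j) =
  if (i < n - i)%N then TL i else TL (n.-1 - i).
Proof.
move=> n50 lin; rewrite /nbG /xG; case: ltnP => hi.
  case: (ltnP i 15) => i15; last by rewrite TL0 // xI0 // mul0r.
  rewrite /TL; congr (_ * (_ - _)).
  apply: eq_big_seq => j /I5 hj; rewrite ifT //; lia.
set m := (n.-1 - i)%N.
case: (ltnP m 15) => m15; last by rewrite TL0 // xI0 // oppr0 mul0r.
rewrite big_map /TL.
rewrite (eq_big_seq (fun j => - xI j)); last first.
  move=> j /I5 hj; rewrite ifF; last by lia.
  congr (- xI _); lia.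
rewrite sumrN; ring.
Qed.

Definition QL : Z := \sum_(0 <= i < 15) TL i.
Definition SL : Z := \sum_(0 <= i < 15) xI i * xI i.

Lemma QZ_gen n : (50 <= n)%N -> QZ n (nbG n) (xG n) = QL + QL.
Proof.
move=> n50; rewrite /QZ.
rewrite (eq_big_nat _ _ (F2 := fun i => if (i < n - i)%N then TL i else TL (n.-1 - i)));
  last by move=> i /andP[_ hi]; apply: termQ.
by rewrite sum_mirror //; [lia | exact: TL0 | exact: TL0].
Qed.

Lemma SZ_gen n : (50 <= n)%N -> SZ n (xG n) = SL + SL.
Proof.
move=> n50; rewrite /SZ.
rewrite (eq_big_nat _ _ (F2 := fun i => if (i < n - i)%N then xI i * xI i
            else xI (n.-1 - i) * xI (n.-1 - i))).
  rewrite (sum_mirror (F1 := fun i => xI i * xI i) (F2 := fun i => xI i * xI i)) //.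
  - lia.
  - by move=> i hi; rewrite xI0 // mul0r.
  - by move=> i hi; rewrite xI0 // mul0r.
by move=> i _; rewrite /xG; case: ifP => _; rewrite ?mulrNN.
Qed.

Lemma TZ_gen n : (50 <= n)%N -> TZ n (xG n) = 0.
Proof.
move=> n50; rewrite /TZ /xG.
rewrite (sum_mirror (F1 := xI) (F2 := fun i => - xI i)) //; last 3 first.
- lia.
- exact: xI0.
- by move=> i hi; rewrite xI0 // oppr0.
by rewrite sumrN subrr.
Qed.

Lemma gen_case (R : rcfType) n (mu : R) : (50 <= n)%N ->
  (forall (e' : rel 'I_n) (mu' : R), connected_quartic e' -> alg_conn e' mu' -> mu <= mu') ->
  mu < 59%:R / 1000%:R.
Proof.
move=> n50 hmin.
apply: (reduceZ (nb := nbG n) (xz := xG n) hmin (nbG_ok n50)).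
- exact: TZ_gen.
- rewrite SZ_gen // /SL unlock; vm_compute; reflexivity.
- by [].
rewrite QZ_gen // SZ_gen // /QL /SL /TL /xI /nbI unlock; vm_compute; reflexivity.
Qed.

Definition tbl11 : seq (seq nat) := [:: [:: 1; 2; 3; 4]; [:: 0; 5; 2; 3]; [:: 0; 5; 1; 3]; [:: 0; 5; 1; 2]; [:: 0; 5; 6; 7]; [:: 1; 2; 3; 4]; [:: 8; 9; 10; 4]; [:: 8; 9; 10; 4]; [:: 6; 7; 9; 10]; [:: 6; 7; 8; 10]; [:: 6; 7; 8; 9]].
Definition xs11 : seq Z := [:: (-82); (-100); (-100); (-100); (0); (-82); (82); (82); (100); (100); (100)].
Lemma chk11 : check 11 tbl11 xs11 355.
Proof. rewrite /check /TZ /SZ /QZ unlock; vm_compute; reflexivity. Qed.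

Definition tbl12 : seq (seq nat) := [:: [:: 1; 2; 3; 4]; [:: 0; 5; 2; 3]; [:: 0; 5; 1; 3]; [:: 0; 5; 1; 2]; [:: 0; 5; 6; 7]; [:: 1; 2; 3; 4]; [:: 8; 9; 7; 4]; [:: 6; 10; 11; 4]; [:: 10; 11; 9; 6]; [:: 8; 10; 11; 6]; [:: 8; 11; 9; 7]; [:: 8; 10; 9; 7]].
Definition xs12 : seq Z := [:: (-83); (-100); (-100); (-100); (-12); (-85); (62); (62); (89); (89); (89); (89)].
Lemma chk12 : check 12 tbl12 xs12 355.
Proof. rewrite /check /TZ /SZ /QZ unlock; vm_compute; reflexivity. Qed.

Definition tbl13 : seq (seq nat) := [:: [:: 1; 2; 3; 4]; [:: 0; 2; 3; 5]; [:: 0; 1; 3; 5]; [:: 0; 1; 2; 4]; [:: 0; 3; 5; 6]; [:: 4; 1; 2; 6]; [:: 4; 5; 7; 8]; [:: 9; 10; 8; 6]; [:: 7; 11; 12; 6]; [:: 11; 12; 10; 7]; [:: 9; 11; 12; 7]; [:: 9; 12; 10; 8]; [:: 9; 11; 10; 8]].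
Definition xs13 : seq Z := [:: (-100); (-100); (-100); (-100); (-73); (-73); (0); (73); (73); (100); (100); (100); (100)].
Lemma chk13 : check 13 tbl13 xs13 268.
Proof. rewrite /check /TZ /SZ /QZ unlock; vm_compute; reflexivity. Qed.

Definition tbl14 : seq (seq nat) := [:: [:: 1; 2; 3; 4]; [:: 0; 2; 3; 5]; [:: 0; 1; 3; 5]; [:: 0; 1; 2; 4]; [:: 0; 3; 5; 6]; [:: 4; 1; 2; 6]; [:: 4; 5; 7; 8]; [:: 9; 10; 8; 6]; [:: 11; 10; 7; 6]; [:: 12; 13; 11; 7]; [:: 12; 13; 7; 8]; [:: 12; 13; 9; 8]; [:: 13; 11; 9; 10]; [:: 12; 11; 9; 10]].
Definition xs14 : seq Z := [:: (-101); (-100); (-100); (-100); (-76); (-76); (-10); (58); (58); (89); (81); (89); (94); (94)].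
Lemma chk14 : check 14 tbl14 xs14 268.
Proof. rewrite /check /TZ /SZ /QZ unlock; vm_compute; reflexivity. Qed.

Definition tbl15 : seq (seq nat) := [:: [:: 1; 2; 3; 4]; [:: 0; 2; 3; 4]; [:: 0; 1; 3; 5]; [:: 0; 1; 2; 6]; [:: 0; 1; 6; 5]; [:: 2; 4; 6; 7]; [:: 3; 4; 5; 7]; [:: 6; 5; 8; 9]; [:: 10; 11; 9; 7]; [:: 12; 11; 8; 7]; [:: 13; 14; 12; 8]; [:: 13; 14; 8; 9]; [:: 13; 14; 10; 9]; [:: 14; 12; 10; 11]; [:: 13; 12; 10; 11]].
Definition xs15 : seq Z := [:: (100); (100); (95); (95); (88); (66); (66); (0); (-66); (-66); (-95); (-88); (-95); (-100); (-100)].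
Lemma chk15 : check 15 tbl15 xs15 268.
Proof. rewrite /check /TZ /SZ /QZ unlock; vm_compute; reflexivity. Qed.

Definition tbl16 : seq (seq nat) := [:: [:: 1; 2; 3; 4]; [:: 0; 5; 2; 3]; [:: 0; 5; 1; 3]; [:: 0; 5; 1; 2]; [:: 0; 5; 6; 7]; [:: 1; 2; 3; 4]; [:: 7; 8; 9; 4]; [:: 6; 8; 9; 4]; [:: 6; 7; 9; 10]; [:: 6; 7; 8; 10]; [:: 8; 9; 11; 12]; [:: 13; 14; 15; 10]; [:: 13; 14; 15; 10]; [:: 11; 12; 14; 15]; [:: 11; 12; 13; 15]; [:: 11; 12; 13; 14]].
Definition xs16 : seq Z := [:: (-92); (-100); (-100); (-100); (-54); (-92); (-11); (-11); (11); (11); (54); (92); (92); (100); (100); (100)].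
Lemma chk16 : check 16 tbl16 xs16 268.
Proof. rewrite /check /TZ /SZ /QZ unlock; vm_compute; reflexivity. Qed.

Definition tbl17 : seq (seq nat) := [:: [:: 1; 2; 3; 4]; [:: 0; 5; 2; 3]; [:: 0; 5; 1; 3]; [:: 0; 5; 1; 2]; [:: 0; 5; 6; 7]; [:: 1; 2; 3; 4]; [:: 7; 8; 9; 4]; [:: 6; 8; 9; 4]; [:: 6; 7; 9; 10]; [:: 6; 7; 8; 10]; [:: 8; 9; 11; 12]; [:: 13; 14; 12; 10]; [:: 11; 15; 16; 10]; [:: 15; 16; 14; 11]; [:: 13; 15; 16; 11]; [:: 13; 16; 14; 12]; [:: 13; 15; 14; 12]].
Definition xs17 : seq Z := [:: (91); (100); (100); (100); (58); (93); (20); (20); (-1); (-1); (-42); (-81); (-81); (-94); (-94); (-94); (-94)].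
Lemma chk17 : check 17 tbl17 xs17 268.
Proof. rewrite /check /TZ /SZ /QZ unlock; vm_compute; reflexivity. Qed.

Definition tbl18 : seq (seq nat) := [:: [:: 1; 2; 3; 4]; [:: 0; 2; 3; 5]; [:: 0; 1; 3; 5]; [:: 0; 1; 2; 4]; [:: 0; 3; 5; 6]; [:: 4; 1; 2; 6]; [:: 4; 5; 7; 8]; [:: 8; 9; 10; 6]; [:: 7; 9; 10; 6]; [:: 7; 8; 10; 11]; [:: 7; 8; 9; 11]; [:: 9; 10; 12; 13]; [:: 14; 15; 13; 11]; [:: 12; 16; 17; 11]; [:: 16; 17; 15; 12]; [:: 14; 16; 17; 12]; [:: 14; 17; 15; 13]; [:: 14; 16; 15; 13]].
Definition xs18 : seq Z := [:: (100); (100); (100); (100); (87); (87); (50); (10); (10); (-10); (-10); (-50); (-87); (-87); (-100); (-100); (-100); (-100)].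
Lemma chk18 : check 18 tbl18 xs18 129.
Proof. rewrite /check /TZ /SZ /QZ unlock; vm_compute; reflexivity. Qed.

Definition tbl19 : seq (seq nat) := [:: [:: 1; 2; 3; 4]; [:: 0; 2; 3; 5]; [:: 0; 1; 3; 5]; [:: 0; 1; 2; 4]; [:: 0; 3; 5; 6]; [:: 4; 1; 2; 6]; [:: 4; 5; 7; 8]; [:: 8; 9; 10; 6]; [:: 7; 9; 10; 6]; [:: 7; 8; 10; 11]; [:: 7; 8; 9; 11]; [:: 9; 10; 12; 13]; [:: 14; 15; 13; 11]; [:: 16; 15; 12; 11]; [:: 17; 18; 16; 12]; [:: 17; 18; 12; 13]; [:: 17; 18; 14; 13]; [:: 18; 16; 14; 15]; [:: 17; 16; 14; 15]].
Definition xs19 : seq Z := [:: (100); (100); (100); (100); (88); (88); (54); (17); (17); (-2); (-2); (-41); (-77); (-77); (-93); (-89); (-93); (-95); (-95)].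
Lemma chk19 : check 19 tbl19 xs19 129.
Proof. rewrite /check /TZ /SZ /QZ unlock; vm_compute; reflexivity. Qed.

Definition tbl20 : seq (seq nat) := [:: [:: 1; 2; 3; 4]; [:: 0; 2; 3; 4]; [:: 0; 1; 3; 5]; [:: 0; 1; 2; 6]; [:: 0; 1; 6; 5]; [:: 2; 4; 6; 7]; [:: 3; 4; 5; 7]; [:: 6; 5; 8; 9]; [:: 9; 10; 11; 7]; [:: 8; 10; 11; 7]; [:: 8; 9; 11; 12]; [:: 8; 9; 10; 12]; [:: 10; 11; 13; 14]; [:: 15; 16; 14; 12]; [:: 17; 16; 13; 12]; [:: 18; 19; 17; 13]; [:: 18; 19; 13; 14]; [:: 18; 19; 15; 14]; [:: 19; 17; 15; 16]; [:: 18; 17; 15; 16]].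
Definition xs20 : seq Z := [:: (100); (100); (98); (98); (94); (83); (83); (47); (10); (10); (-10); (-10); (-47); (-83); (-83); (-98); (-94); (-98); (-100); (-100)].
Lemma chk20 : check 20 tbl20 xs20 129.
Proof. rewrite /check /TZ /SZ /QZ unlock; vm_compute; reflexivity. Qed.

Definition tbl21 : seq (seq nat) := [:: [:: 1; 2; 3; 4]; [:: 0; 5; 2; 3]; [:: 0; 5; 1; 3]; [:: 0; 5; 1; 2]; [:: 0; 5; 6; 7]; [:: 1; 2; 3; 4]; [:: 7; 8; 9; 4]; [:: 6; 8; 9; 4]; [:: 6; 7; 9; 10]; [:: 6; 7; 8; 10]; [:: 8; 9; 11; 12]; [:: 12; 13; 14; 10]; [:: 11; 13; 14; 10]; [:: 11; 12; 14; 15]; [:: 11; 12; 13; 15]; [:: 13; 14; 16; 17]; [:: 18; 19; 20; 15]; [:: 18; 19; 20; 15]; [:: 16; 17; 19; 20]; [:: 16; 17; 18; 20]; [:: 16; 17; 18; 19]].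
Definition xs21 : seq Z := [:: (-95); (-100); (-100); (-100); (-73); (-95); (-48); (-48); (-33); (-33); (0); (33); (33); (48); (48); (73); (95); (95); (100); (100); (100)].
Lemma chk21 : check 21 tbl21 xs21 91.
Proof. rewrite /check /TZ /SZ /QZ unlock; vm_compute; reflexivity. Qed.

Definition tbl22 : seq (seq nat) := [:: [:: 1; 2; 3; 4]; [:: 0; 5; 2; 3]; [:: 0; 5; 1; 3]; [:: 0; 5; 1; 2]; [:: 0; 5; 6; 7]; [:: 1; 2; 3; 4]; [:: 7; 8; 9; 4]; [:: 6; 8; 9; 4]; [:: 6; 7; 9; 10]; [:: 6; 7; 8; 10]; [:: 8; 9; 11; 12]; [:: 12; 13; 14; 10]; [:: 11; 13; 14; 10]; [:: 11; 12; 14; 15]; [:: 11; 12; 13; 15]; [:: 13; 14; 16; 17]; [:: 18; 19; 17; 15]; [:: 16; 20; 21; 15]; [:: 20; 21; 19; 16]; [:: 18; 20; 21; 16]; [:: 18; 21; 19; 17]; [:: 18; 20; 19; 17]].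
Definition xs22 : seq Z := [:: (-93); (-100); (-100); (-100); (-75); (-96); (-52); (-52); (-38); (-38); (-7); (24); (24); (39); (39); (65); (88); (88); (96); (96); (96); (96)].
Lemma chk22 : check 22 tbl22 xs22 91.
Proof. rewrite /check /TZ /SZ /QZ unlock; vm_compute; reflexivity. Qed.

Definition tbl23 : seq (seq nat) := [:: [:: 1; 2; 3; 4]; [:: 0; 2; 3; 5]; [:: 0; 1; 3; 5]; [:: 0; 1; 2; 4]; [:: 0; 3; 5; 6]; [:: 4; 1; 2; 6]; [:: 4; 5; 7; 8]; [:: 8; 9; 10; 6]; [:: 7; 9; 10; 6]; [:: 7; 8; 10; 11]; [:: 7; 8; 9; 11]; [:: 9; 10; 12; 13]; [:: 13; 14; 15; 11]; [:: 12; 14; 15; 11]; [:: 12; 13; 15; 16]; [:: 12; 13; 14; 16]; [:: 14; 15; 17; 18]; [:: 19; 20; 18; 16]; [:: 17; 21; 22; 16]; [:: 21; 22; 20; 17]; [:: 19; 21; 22; 17]; [:: 19; 22; 20; 18]; [:: 19; 21; 20; 18]].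
Definition xs23 : seq Z := [:: (-100); (-100); (-100); (-100); (-92); (-92); (-70); (-45); (-45); (-31); (-31); (0); (31); (31); (45); (45); (70); (92); (92); (100); (100); (100); (100)].
Lemma chk23 : check 23 tbl23 xs23 91.
Proof. rewrite /check /TZ /SZ /QZ unlock; vm_compute; reflexivity. Qed.

Definition tbl24 : seq (seq nat) := [:: [:: 1; 2; 3; 4]; [:: 0; 2; 3; 5]; [:: 0; 1; 3; 5]; [:: 0; 1; 2; 4]; [:: 0; 3; 5; 6]; [:: 4; 1; 2; 6]; [:: 4; 5; 7; 8]; [:: 8; 9; 10; 6]; [:: 7; 9; 10; 6]; [:: 7; 8; 10; 11]; [:: 7; 8; 9; 11]; [:: 9; 10; 12; 13]; [:: 13; 14; 15; 11]; [:: 12; 14; 15; 11]; [:: 12; 13; 15; 16]; [:: 12; 13; 14; 16]; [:: 14; 15; 17; 18]; [:: 19; 20; 18; 16]; [:: 21; 20; 17; 16]; [:: 22; 23; 21; 17]; [:: 22; 23; 17; 18]; [:: 22; 23; 19; 18]; [:: 23; 21; 19; 20]; [:: 22; 21; 19; 20]].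
Definition xs24 : seq Z := [:: (-100); (-100); (-100); (-100); (-93); (-93); (-72); (-49); (-49); (-35); (-35); (-6); (23); (23); (37); (37); (63); (86); (86); (95); (93); (95); (97); (97)].
Lemma chk24 : check 24 tbl24 xs24 91.
Proof. rewrite /check /TZ /SZ /QZ unlock; vm_compute; reflexivity. Qed.

Definition tbl25 : seq (seq nat) := [:: [:: 1; 2; 3; 4]; [:: 0; 2; 3; 4]; [:: 0; 1; 3; 5]; [:: 0; 1; 2; 6]; [:: 0; 1; 6; 5]; [:: 2; 4; 6; 7]; [:: 3; 4; 5; 7]; [:: 6; 5; 8; 9]; [:: 9; 10; 11; 7]; [:: 8; 10; 11; 7]; [:: 8; 9; 11; 12]; [:: 8; 9; 10; 12]; [:: 10; 11; 13; 14]; [:: 14; 15; 16; 12]; [:: 13; 15; 16; 12]; [:: 13; 14; 16; 17]; [:: 13; 14; 15; 17]; [:: 15; 16; 18; 19]; [:: 20; 21; 19; 17]; [:: 22; 21; 18; 17]; [:: 23; 24; 22; 18]; [:: 23; 24; 18; 19]; [:: 23; 24; 20; 19]; [:: 24; 22; 20; 21]; [:: 23; 22; 20; 21]].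
Definition xs25 : seq Z := [:: (100); (100); (99); (99); (96); (89); (89); (67); (43); (43); (29); (29); (0); (-29); (-29); (-43); (-43); (-67); (-89); (-89); (-99); (-96); (-99); (-100); (-100)].
Lemma chk25 : check 25 tbl25 xs25 91.
Proof. rewrite /check /TZ /SZ /QZ unlock; vm_compute; reflexivity. Qed.

Definition tbl26 : seq (seq nat) := [:: [:: 1; 2; 3; 4]; [:: 0; 5; 2; 3]; [:: 0; 5; 1; 3]; [:: 0; 5; 1; 2]; [:: 0; 5; 6; 7]; [:: 1; 2; 3; 4]; [:: 7; 8; 9; 4]; [:: 6; 8; 9; 4]; [:: 6; 7; 9; 10]; [:: 6; 7; 8; 10]; [:: 8; 9; 11; 12]; [:: 12; 13; 14; 10]; [:: 11; 13; 14; 10]; [:: 11; 12; 14; 15]; [:: 11; 12; 13; 15]; [:: 13; 14; 16; 17]; [:: 17; 18; 19; 15]; [:: 16; 18; 19; 15]; [:: 16; 17; 19; 20]; [:: 16; 17; 18; 20]; [:: 18; 19; 21; 22]; [:: 23; 24; 25; 20]; [:: 23; 24; 25; 20]; [:: 21; 22; 24; 25]; [:: 21; 22; 23; 25]; [:: 21; 22; 23; 24]].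
Definition xs26 : seq Z := [:: (-97); (-100); (-100); (-100); (-83); (-97); (-66); (-66); (-55); (-55); (-31); (-6); (-6); (6); (6); (31); (55); (55); (66); (66); (83); (97); (97); (100); (100); (100)].
Lemma chk26 : check 26 tbl26 xs26 59.
Proof. rewrite /check /TZ /SZ /QZ unlock; vm_compute; reflexivity. Qed.

Definition tbl27 : seq (seq nat) := [:: [:: 1; 2; 3; 4]; [:: 0; 5; 2; 3]; [:: 0; 5; 1; 3]; [:: 0; 5; 1; 2]; [:: 0; 5; 6; 7]; [:: 1; 2; 3; 4]; [:: 7; 8; 9; 4]; [:: 6; 8; 9; 4]; [:: 6; 7; 9; 10]; [:: 6; 7; 8; 10]; [:: 8; 9; 11; 12]; [:: 12; 13; 14; 10]; [:: 11; 13; 14; 10]; [:: 11; 12; 14; 15]; [:: 11; 12; 13; 15]; [:: 13; 14; 16; 17]; [:: 17; 18; 19; 15]; [:: 16; 18; 19; 15]; [:: 16; 17; 19; 20]; [:: 16; 17; 18; 20]; [:: 18; 19; 21; 22]; [:: 23; 24; 22; 20]; [:: 21; 25; 26; 20]; [:: 25; 26; 24; 21]; [:: 23; 25; 26; 21]; [:: 23; 26; 24; 22]; [:: 23; 25; 24; 22]].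
Definition xs27 : seq Z := [:: (-98); (-100); (-100); (-100); (-84); (-97); (-68); (-68); (-58); (-58); (-36); (-12); (-12); (0); (0); (25); (48); (48); (59); (59); (76); (92); (92); (98); (98); (98); (98)].
Lemma chk27 : check 27 tbl27 xs27 59.
Proof. rewrite /check /TZ /SZ /QZ unlock; vm_compute; reflexivity. Qed.

Definition tbl28 : seq (seq nat) := [:: [:: 1; 2; 3; 4]; [:: 0; 2; 3; 5]; [:: 0; 1; 3; 5]; [:: 0; 1; 2; 4]; [:: 0; 3; 5; 6]; [:: 4; 1; 2; 6]; [:: 4; 5; 7; 8]; [:: 8; 9; 10; 6]; [:: 7; 9; 10; 6]; [:: 7; 8; 10; 11]; [:: 7; 8; 9; 11]; [:: 9; 10; 12; 13]; [:: 13; 14; 15; 11]; [:: 12; 14; 15; 11]; [:: 12; 13; 15; 16]; [:: 12; 13; 14; 16]; [:: 14; 15; 17; 18]; [:: 18; 19; 20; 16]; [:: 17; 19; 20; 16]; [:: 17; 18; 20; 21]; [:: 17; 18; 19; 21]; [:: 19; 20; 22; 23]; [:: 24; 25; 23; 21]; [:: 22; 26; 27; 21]; [:: 26; 27; 25; 22]; [:: 24; 26; 27; 22]; [:: 24; 27; 25; 23]; [:: 24; 26; 25; 23]].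
Definition xs28 : seq Z := [:: (100); (100); (100); (100); (95); (95); (80); (63); (63); (53); (53); (30); (6); (6); (-6); (-6); (-30); (-53); (-53); (-63); (-63); (-80); (-95); (-95); (-100); (-100); (-100); (-100)].
Lemma chk28 : check 28 tbl28 xs28 59.
Proof. rewrite /check /TZ /SZ /QZ unlock; vm_compute; reflexivity. Qed.

Definition tbl29 : seq (seq nat) := [:: [:: 1; 2; 3; 4]; [:: 0; 2; 3; 5]; [:: 0; 1; 3; 5]; [:: 0; 1; 2; 4]; [:: 0; 3; 5; 6]; [:: 4; 1; 2; 6]; [:: 4; 5; 7; 8]; [:: 8; 9; 10; 6]; [:: 7; 9; 10; 6]; [:: 7; 8; 10; 11]; [:: 7; 8; 9; 11]; [:: 9; 10; 12; 13]; [:: 13; 14; 15; 11]; [:: 12; 14; 15; 11]; [:: 12; 13; 15; 16]; [:: 12; 13; 14; 16]; [:: 14; 15; 17; 18]; [:: 18; 19; 20; 16]; [:: 17; 19; 20; 16]; [:: 17; 18; 20; 21]; [:: 17; 18; 19; 21]; [:: 19; 20; 22; 23]; [:: 24; 25; 23; 21]; [:: 26; 25; 22; 21]; [:: 27; 28; 26; 22]; [:: 27; 28; 22; 23]; [:: 27; 28; 24; 23]; [:: 28; 26; 24; 25]; [:: 27; 26; 24; 25]].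
Definition xs29 : seq Z := [:: (-102); (-100); (-100); (-100); (-95); (-95); (-81); (-65); (-65); (-55); (-55); (-34); (-11); (-11); (1); (1); (24); (46); (46); (56); (56); (74); (90); (90); (97); (95); (97); (98); (98)].
Lemma chk29 : check 29 tbl29 xs29 59.
Proof. rewrite /check /TZ /SZ /QZ unlock; vm_compute; reflexivity. Qed.

Definition tbl30 : seq (seq nat) := [:: [:: 1; 2; 3; 4]; [:: 0; 2; 3; 4]; [:: 0; 1; 3; 5]; [:: 0; 1; 2; 6]; [:: 0; 1; 6; 5]; [:: 2; 4; 6; 7]; [:: 3; 4; 5; 7]; [:: 6; 5; 8; 9]; [:: 9; 10; 11; 7]; [:: 8; 10; 11; 7]; [:: 8; 9; 11; 12]; [:: 8; 9; 10; 12]; [:: 10; 11; 13; 14]; [:: 14; 15; 16; 12]; [:: 13; 15; 16; 12]; [:: 13; 14; 16; 17]; [:: 13; 14; 15; 17]; [:: 15; 16; 18; 19]; [:: 19; 20; 21; 17]; [:: 18; 20; 21; 17]; [:: 18; 19; 21; 22]; [:: 18; 19; 20; 22]; [:: 20; 21; 23; 24]; [:: 25; 26; 24; 22]; [:: 27; 26; 23; 22]; [:: 28; 29; 27; 23]; [:: 28; 29; 23; 24]; [:: 28; 29; 25; 24]; [:: 29; 27; 25; 26]; [:: 28; 27; 25; 26]].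
Definition xs30 : seq Z := [:: (100); (100); (99); (99); (97); (93); (93); (77); (60); (60); (50); (50); (28); (6); (6); (-6); (-6); (-28); (-50); (-50); (-60); (-60); (-77); (-93); (-93); (-99); (-97); (-99); (-100); (-100)].
Lemma chk30 : check 30 tbl30 xs30 59.
Proof. rewrite /check /TZ /SZ /QZ unlock; vm_compute; reflexivity. Qed.

Definition tbl31 : seq (seq nat) := [:: [:: 1; 2; 3; 4]; [:: 0; 5; 2; 3]; [:: 0; 5; 1; 3]; [:: 0; 5; 1; 2]; [:: 0; 5; 6; 7]; [:: 1; 2; 3; 4]; [:: 7; 8; 9; 4]; [:: 6; 8; 9; 4]; [:: 6; 7; 9; 10]; [:: 6; 7; 8; 10]; [:: 8; 9; 11; 12]; [:: 12; 13; 14; 10]; [:: 11; 13; 14; 10]; [:: 11; 12; 14; 15]; [:: 11; 12; 13; 15]; [:: 13; 14; 16; 17]; [:: 17; 18; 19; 15]; [:: 16; 18; 19; 15]; [:: 16; 17; 19; 20]; [:: 16; 17; 18; 20]; [:: 18; 19; 21; 22]; [:: 22; 23; 24; 20]; [:: 21; 23; 24; 20]; [:: 21; 22; 24; 25]; [:: 21; 22; 23; 25]; [:: 23; 24; 26; 27]; [:: 28; 29; 30; 25]; [:: 28; 29; 30; 25]; [:: 26; 27; 29; 30]; [:: 26; 27; 28; 30]; [:: 26; 27; 28; 29]].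
Definition xs31 : seq Z := [:: (-98); (-100); (-100); (-100); (-88); (-98); (-76); (-76); (-68); (-68); (-50); (-31); (-31); (-21); (-21); (0); (21); (21); (31); (31); (50); (68); (68); (76); (76); (88); (98); (98); (100); (100); (100)].
Lemma chk31 : check 31 tbl31 xs31 59.
Proof. rewrite /check /TZ /SZ /QZ unlock; vm_compute; reflexivity. Qed.

Definition tbl32 : seq (seq nat) := [:: [:: 1; 2; 3; 4]; [:: 0; 5; 2; 3]; [:: 0; 5; 1; 3]; [:: 0; 5; 1; 2]; [:: 0; 5; 6; 7]; [:: 1; 2; 3; 4]; [:: 7; 8; 9; 4]; [:: 6; 8; 9; 4]; [:: 6; 7; 9; 10]; [:: 6; 7; 8; 10]; [:: 8; 9; 11; 12]; [:: 12; 13; 14; 10]; [:: 11; 13; 14; 10]; [:: 11; 12; 14; 15]; [:: 11; 12; 13; 15]; [:: 13; 14; 16; 17]; [:: 17; 18; 19; 15]; [:: 16; 18; 19; 15]; [:: 16; 17; 19; 20]; [:: 16; 17; 18; 20]; [:: 18; 19; 21; 22]; [:: 22; 23; 24; 20]; [:: 21; 23; 24; 20]; [:: 21; 22; 24; 25]; [:: 21; 22; 23; 25]; [:: 23; 24; 26; 27]; [:: 28; 29; 27; 25]; [:: 26; 30; 31; 25]; [:: 30; 31; 29; 26]; [:: 28; 30; 31; 26]; [:: 28; 31; 29; 27]; [:: 28; 30; 29; 27]].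
Definition xs32 : seq Z := [:: (-97); (-100); (-100); (-100); (-88); (-98); (-77); (-77); (-70); (-70); (-53); (-35); (-35); (-25); (-25); (-5); (16); (16); (26); (26); (44); (62); (62); (70); (70); (83); (94); (94); (98); (98); (98); (98)].
Lemma chk32 : check 32 tbl32 xs32 59.
Proof. rewrite /check /TZ /SZ /QZ unlock; vm_compute; reflexivity. Qed.

Definition tbl33 : seq (seq nat) := [:: [:: 1; 2; 3; 4]; [:: 0; 2; 3; 5]; [:: 0; 1; 3; 5]; [:: 0; 1; 2; 4]; [:: 0; 3; 5; 6]; [:: 4; 1; 2; 6]; [:: 4; 5; 7; 8]; [:: 8; 9; 10; 6]; [:: 7; 9; 10; 6]; [:: 7; 8; 10; 11]; [:: 7; 8; 9; 11]; [:: 9; 10; 12; 13]; [:: 13; 14; 15; 11]; [:: 12; 14; 15; 11]; [:: 12; 13; 15; 16]; [:: 12; 13; 14; 16]; [:: 14; 15; 17; 18]; [:: 18; 19; 20; 16]; [:: 17; 19; 20; 16]; [:: 17; 18; 20; 21]; [:: 17; 18; 19; 21]; [:: 19; 20; 22; 23]; [:: 23; 24; 25; 21]; [:: 22; 24; 25; 21]; [:: 22; 23; 25; 26]; [:: 22; 23; 24; 26]; [:: 24; 25; 27; 28]; [:: 29; 30; 28; 26]; [:: 27; 31; 32; 26]; [:: 31; 32; 30; 27]; [:: 29; 31; 32; 27]; [:: 29; 32; 30; 28]; [:: 29; 31; 30; 28]].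
Definition xs33 : seq Z := [:: (100); (100); (100); (100); (96); (96); (86); (73); (73); (66); (66); (48); (30); (30); (20); (20); (0); (-20); (-20); (-30); (-30); (-48); (-66); (-66); (-73); (-73); (-86); (-96); (-96); (-100); (-100); (-100); (-100)].
Lemma chk33 : check 33 tbl33 xs33 59.
Proof. rewrite /check /TZ /SZ /QZ unlock; vm_compute; reflexivity. Qed.

Definition tbl34 : seq (seq nat) := [:: [:: 1; 2; 3; 4]; [:: 0; 2; 3; 5]; [:: 0; 1; 3; 5]; [:: 0; 1; 2; 4]; [:: 0; 3; 5; 6]; [:: 4; 1; 2; 6]; [:: 4; 5; 7; 8]; [:: 8; 9; 10; 6]; [:: 7; 9; 10; 6]; [:: 7; 8; 10; 11]; [:: 7; 8; 9; 11]; [:: 9; 10; 12; 13]; [:: 13; 14; 15; 11]; [:: 12; 14; 15; 11]; [:: 12; 13; 15; 16]; [:: 12; 13; 14; 16]; [:: 14; 15; 17; 18]; [:: 18; 19; 20; 16]; [:: 17; 19; 20; 16]; [:: 17; 18; 20; 21]; [:: 17; 18; 19; 21]; [:: 19; 20; 22; 23]; [:: 23; 24; 25; 21]; [:: 22; 24; 25; 21]; [:: 22; 23; 25; 26]; [:: 22; 23; 24; 26]; [:: 24; 25; 27; 28]; [:: 29; 30; 28; 26]; [:: 31; 30; 27; 26]; [:: 32; 33; 31; 27]; [:: 32; 33; 27; 28]; [:: 32; 33; 29; 28]; [:: 33; 31; 29; 30]; [:: 32; 31; 29; 30]].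
Definition xs34 : seq Z := [:: (-99); (-100); (-100); (-100); (-97); (-97); (-86); (-75); (-75); (-67); (-67); (-51); (-33); (-33); (-24); (-24); (-4); (15); (15); (25); (25); (43); (60); (60); (68); (68); (81); (93); (93); (97); (96); (97); (98); (98)].
Lemma chk34 : check 34 tbl34 xs34 59.
Proof. rewrite /check /TZ /SZ /QZ unlock; vm_compute; reflexivity. Qed.

Definition tbl35 : seq (seq nat) := [:: [:: 1; 2; 3; 4]; [:: 0; 2; 3; 4]; [:: 0; 1; 3; 5]; [:: 0; 1; 2; 6]; [:: 0; 1; 6; 5]; [:: 2; 4; 6; 7]; [:: 3; 4; 5; 7]; [:: 6; 5; 8; 9]; [:: 9; 10; 11; 7]; [:: 8; 10; 11; 7]; [:: 8; 9; 11; 12]; [:: 8; 9; 10; 12]; [:: 10; 11; 13; 14]; [:: 14; 15; 16; 12]; [:: 13; 15; 16; 12]; [:: 13; 14; 16; 17]; [:: 13; 14; 15; 17]; [:: 15; 16; 18; 19]; [:: 19; 20; 21; 17]; [:: 18; 20; 21; 17]; [:: 18; 19; 21; 22]; [:: 18; 19; 20; 22]; [:: 20; 21; 23; 24]; [:: 24; 25; 26; 22]; [:: 23; 25; 26; 22]; [:: 23; 24; 26; 27]; [:: 23; 24; 25; 27]; [:: 25; 26; 28; 29]; [:: 30; 31; 29; 27]; [:: 32; 31; 28; 27]; [:: 33; 34; 32; 28]; [:: 33; 34; 28; 29]; [:: 33; 34; 30; 29]; [:: 34; 32; 30; 31]; [:: 33; 32; 30; 31]].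
Definition xs35 : seq Z := [:: (100); (100); (99); (99); (98); (95); (95); (83); (71); (71); (63); (63); (46); (29); (29); (19); (19); (0); (-19); (-19); (-29); (-29); (-46); (-63); (-63); (-71); (-71); (-83); (-95); (-95); (-99); (-98); (-99); (-100); (-100)].
Lemma chk35 : check 35 tbl35 xs35 59.
Proof. rewrite /check /TZ /SZ /QZ unlock; vm_compute; reflexivity. Qed.

Definition tbl36 : seq (seq nat) := [:: [:: 1; 2; 3; 4]; [:: 0; 5; 2; 3]; [:: 0; 5; 1; 3]; [:: 0; 5; 1; 2]; [:: 0; 5; 6; 7]; [:: 1; 2; 3; 4]; [:: 7; 8; 9; 4]; [:: 6; 8; 9; 4]; [:: 6; 7; 9; 10]; [:: 6; 7; 8; 10]; [:: 8; 9; 11; 12]; [:: 12; 13; 14; 10]; [:: 11; 13; 14; 10]; [:: 11; 12; 14; 15]; [:: 11; 12; 13; 15]; [:: 13; 14; 16; 17]; [:: 17; 18; 19; 15]; [:: 16; 18; 19; 15]; [:: 16; 17; 19; 20]; [:: 16; 17; 18; 20]; [:: 18; 19; 21; 22]; [:: 22; 23; 24; 20]; [:: 21; 23; 24; 20]; [:: 21; 22; 24; 25]; [:: 21; 22; 23; 25]; [:: 23; 24; 26; 27]; [:: 27; 28; 29; 25]; [:: 26; 28; 29; 25]; [:: 26; 27; 29; 30]; [:: 26; 27; 28; 30]; [:: 28; 29; 31; 32]; [:: 33; 34; 35; 30]; [:: 33; 34; 35; 30]; [:: 31; 32; 34; 35]; [:: 31; 32; 33; 35]; [:: 31; 32; 33;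 34]].
Definition xs36 : seq Z := [:: (98); (100); (100); (100); (91); (98); (82); (82); (76); (76); (62); (48); (48); (40); (40); (22); (4); (4); (-4); (-4); (-22); (-40); (-40); (-48); (-48); (-62); (-76); (-76); (-82); (-82); (-91); (-98); (-98); (-100); (-100); (-100)].
Lemma chk36 : check 36 tbl36 xs36 59.
Proof. rewrite /check /TZ /SZ /QZ unlock; vm_compute; reflexivity. Qed.

Definition tbl37 : seq (seq nat) := [:: [:: 1; 2; 3; 4]; [:: 0; 5; 2; 3]; [:: 0; 5; 1; 3]; [:: 0; 5; 1; 2]; [:: 0; 5; 6; 7]; [:: 1; 2; 3; 4]; [:: 7; 8; 9; 4]; [:: 6; 8; 9; 4]; [:: 6; 7; 9; 10]; [:: 6; 7; 8; 10]; [:: 8; 9; 11; 12]; [:: 12; 13; 14; 10]; [:: 11; 13; 14; 10]; [:: 11; 12; 14; 15]; [:: 11; 12; 13; 15]; [:: 13; 14; 16; 17]; [:: 17; 18; 19; 15]; [:: 16; 18; 19; 15]; [:: 16; 17; 19; 20]; [:: 16; 17; 18; 20]; [:: 18; 19; 21; 22]; [:: 22; 23; 24; 20]; [:: 21; 23; 24; 20]; [:: 21; 22; 24; 25]; [:: 21; 22; 23; 25]; [:: 23; 24; 26; 27]; [:: 27; 28; 29; 25]; [:: 26; 28; 29; 25]; [:: 26; 27; 29; 30]; [:: 26; 27; 28; 30]; [:: 28; 29; 31; 32]; [:: 33; 34; 32; 30]; [:: 31; 35; 36; 30]; [:: 35; 36; 34; 31]; [:: 33; 35; 36; 31]; [::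 33; 36; 34; 32]; [:: 33; 35; 34; 32]].
Definition xs37 : seq Z := [:: (104); (100); (100); (100); (91); (99); (83); (83); (77); (77); (64); (50); (50); (42); (42); (26); (9); (9); (0); (0); (-17); (-35); (-35); (-43); (-43); (-58); (-72); (-72); (-78); (-78); (-87); (-96); (-96); (-99); (-99); (-99); (-99)].
Lemma chk37 : check 37 tbl37 xs37 59.
Proof. rewrite /check /TZ /SZ /QZ unlock; vm_compute; reflexivity. Qed.

Definition tbl38 : seq (seq nat) := [:: [:: 1; 2; 3; 4]; [:: 0; 2; 3; 5]; [:: 0; 1; 3; 5]; [:: 0; 1; 2; 4]; [:: 0; 3; 5; 6]; [:: 4; 1; 2; 6]; [:: 4; 5; 7; 8]; [:: 8; 9; 10; 6]; [:: 7; 9; 10; 6]; [:: 7; 8; 10; 11]; [:: 7; 8; 9; 11]; [:: 9; 10; 12; 13]; [:: 13; 14; 15; 11]; [:: 12; 14; 15; 11]; [:: 12; 13; 15; 16]; [:: 12; 13; 14; 16]; [:: 14; 15; 17; 18]; [:: 18; 19; 20; 16]; [:: 17; 19; 20; 16]; [:: 17; 18; 20; 21]; [:: 17; 18; 19; 21]; [:: 19; 20; 22; 23]; [:: 23; 24; 25; 21]; [:: 22; 24; 25; 21]; [:: 22; 23; 25; 26]; [:: 22; 23; 24; 26]; [:: 24; 25; 27; 28]; [:: 28; 29; 30; 26]; [:: 27; 29; 30; 26]; [:: 27; 28; 30; 31]; [:: 27; 28; 29; 31]; [:: 29; 30; 32; 33]; [:: 34; 35; 33; 31]; [:: 32; 36;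 37; 31]; [:: 36; 37; 35; 32]; [:: 34; 36; 37; 32]; [:: 34; 37; 35; 33]; [:: 34; 36; 35; 33]].
Definition xs38 : seq Z := [:: (-100); (-100); (-100); (-100); (-97); (-97); (-89); (-80); (-80); (-74); (-74); (-60); (-46); (-46); (-38); (-38); (-21); (-4); (-4); (4); (4); (21); (38); (38); (46); (46); (60); (74); (74); (80); (80); (89); (97); (97); (100); (100); (100); (100)].
Lemma chk38 : check 38 tbl38 xs38 59.
Proof. rewrite /check /TZ /SZ /QZ unlock; vm_compute; reflexivity. Qed.

Definition tbl39 : seq (seq nat) := [:: [:: 1; 2; 3; 4]; [:: 0; 2; 3; 5]; [:: 0; 1; 3; 5]; [:: 0; 1; 2; 4]; [:: 0; 3; 5; 6]; [:: 4; 1; 2; 6]; [:: 4; 5; 7; 8]; [:: 8; 9; 10; 6]; [:: 7; 9; 10; 6]; [:: 7; 8; 10; 11]; [:: 7; 8; 9; 11]; [:: 9; 10; 12; 13]; [:: 13; 14; 15; 11]; [:: 12; 14; 15; 11]; [:: 12; 13; 15; 16]; [:: 12; 13; 14; 16]; [:: 14; 15; 17; 18]; [:: 18; 19; 20; 16]; [:: 17; 19; 20; 16]; [:: 17; 18; 20; 21]; [:: 17; 18; 19; 21]; [:: 19; 20; 22; 23]; [:: 23; 24; 25; 21]; [:: 22; 24; 25; 21]; [:: 22; 23; 25; 26]; [:: 22; 23; 24; 26]; [:: 24; 25; 27; 28]; [:: 28; 29; 30; 26]; [:: 27; 29; 30; 26]; [:: 27; 28; 30; 31]; [:: 27; 28;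 29; 31]; [:: 29; 30; 32; 33]; [:: 34; 35; 33; 31]; [:: 36; 35; 32; 31]; [:: 37; 38; 36; 32]; [:: 37; 38; 32; 33]; [:: 37; 38; 34; 33]; [:: 38; 36; 34; 35]; [:: 37; 36; 34; 35]].
Definition xs39 : seq Z := [:: (-98); (-100); (-100); (-100); (-97); (-97); (-90); (-81); (-81); (-75); (-75); (-62); (-48); (-48); (-41); (-41); (-25); (-8); (-8); (0); (0); (17); (33); (33); (41); (41); (56); (70); (70); (75); (75); (85); (94); (94); (98); (97); (98); (99); (99)].
Lemma chk39 : check 39 tbl39 xs39 59.
Proof. rewrite /check /TZ /SZ /QZ unlock; vm_compute; reflexivity. Qed.

Definition tbl40 : seq (seq nat) := [:: [:: 1; 2; 3; 4]; [:: 0; 2; 3; 4]; [:: 0; 1; 3; 5]; [:: 0; 1; 2; 6]; [:: 0; 1; 6; 5]; [:: 2; 4; 6; 7]; [:: 3; 4; 5; 7]; [:: 6; 5; 8; 9]; [:: 9; 10; 11; 7]; [:: 8; 10; 11; 7]; [:: 8; 9; 11; 12]; [:: 8; 9; 10; 12]; [:: 10; 11; 13; 14]; [:: 14; 15; 16; 12]; [:: 13; 15; 16; 12]; [:: 13; 14; 16; 17]; [:: 13; 14; 15; 17]; [:: 15; 16; 18; 19]; [:: 19; 20; 21; 17]; [:: 18; 20; 21; 17]; [:: 18; 19; 21; 22]; [:: 18; 19; 20; 22]; [:: 20; 21; 23; 24]; [:: 24; 25; 26; 22]; [:: 23; 25; 26; 22]; [:: 23; 24; 26; 27]; [:: 23;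 24; 25; 27]; [:: 25; 26; 28; 29]; [:: 29; 30; 31; 27]; [:: 28; 30; 31; 27]; [:: 28; 29; 31; 32]; [:: 28; 29; 30; 32]; [:: 30; 31; 33; 34]; [:: 35; 36; 34; 32]; [:: 37; 36; 33; 32]; [:: 38; 39; 37; 33]; [:: 38; 39; 33; 34]; [:: 38; 39; 35; 34]; [:: 39; 37; 35; 36]; [:: 38; 37; 35; 36]].
Definition xs40 : seq Z := [:: (100); (100); (99); (99); (99); (96); (96); (87); (78); (78); (72); (72); (58); (44); (44); (37); (37); (21); (4); (4); (-4); (-4); (-21); (-37); (-37); (-44); (-44); (-58); (-72); (-72); (-78); (-78); (-87); (-96); (-96); (-99); (-99); (-99); (-100); (-100)].
Lemma chk40 : check 40 tbl40 xs40 59.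
Proof. rewrite /check /TZ /SZ /QZ unlock; vm_compute; reflexivity. Qed.

Definition tbl41 : seq (seq nat) := [:: [:: 1; 2; 3; 4]; [:: 0; 5; 2; 3]; [:: 0; 5; 1; 3]; [:: 0; 5; 1; 2]; [:: 0; 5; 6; 7]; [:: 1; 2; 3; 4]; [:: 7; 8; 9; 4]; [:: 6; 8; 9; 4]; [:: 6; 7; 9; 10]; [:: 6; 7; 8; 10]; [:: 8; 9; 11; 12]; [:: 12; 13; 14; 10]; [:: 11; 13; 14; 10]; [:: 11; 12; 14; 15]; [:: 11; 12; 13; 15]; [:: 13; 14; 16; 17]; [:: 17; 18; 19; 15]; [:: 16; 18; 19; 15]; [:: 16; 17; 19; 20]; [:: 16; 17; 18; 20]; [:: 18; 19; 21; 22]; [:: 22; 23; 24; 20]; [:: 21; 23; 24; 20]; [:: 21; 22; 24; 25]; [:: 21; 22; 23; 25]; [:: 23; 24; 26; 27]; [:: 27; 28; 29; 25]; [:: 26; 28; 29; 25]; [:: 26; 27; 29; 30]; [:: 26; 27; 28; 30]; [:: 28; 29; 31; 32]; [:: 32; 33; 34; 30]; [:: 31; 33; 34; 30]; [:: 31; 32; 34; 35]; [:: 31; 32; 33; 35]; [:: 33; 34; 36; 37]; [:: 38; 39; 40; 35]; [:: 38; 39; 40; 35]; [:: 36; 37; 39; 40]; [:: 36; 37; 38; 40]; [:: 36; 37; 38; 39]].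
Definition xs41 : seq Z := [:: (99); (100); (100); (100); (93); (99); (86); (86); (82); (82); (71); (59); (59); (52); (52); (38); (23); (23); (16); (16); (0); (-16); (-16); (-23); (-23); (-38); (-52); (-52); (-59); (-59); (-71); (-82); (-82); (-86); (-86); (-93); (-99); (-99); (-100); (-100); (-100)].
Lemma chk41 : check 41 tbl41 xs41 59.
Proof. rewrite /check /TZ /SZ /QZ unlock; vm_compute; reflexivity. Qed.

Definition tbl42 : seq (seq nat) := [:: [:: 1; 2; 3; 4]; [:: 0; 5; 2; 3]; [:: 0; 5; 1; 3]; [:: 0; 5; 1; 2]; [:: 0; 5; 6; 7]; [:: 1; 2; 3; 4]; [:: 7; 8; 9; 4]; [:: 6; 8; 9; 4]; [:: 6; 7; 9; 10]; [:: 6; 7; 8; 10]; [:: 8; 9; 11; 12]; [:: 12; 13; 14; 10]; [:: 11; 13; 14; 10]; [:: 11; 12; 14; 15]; [:: 11; 12; 13; 15]; [:: 13; 14; 16; 17]; [:: 17; 18; 19; 15]; [:: 16; 18; 19; 15]; [:: 16; 17; 19; 20]; [:: 16; 17; 18; 20]; [:: 18; 19; 21; 22]; [:: 22; 23; 24; 20]; [:: 21; 23; 24; 20]; [:: 21; 22; 24; 25]; [:: 21; 22; 23; 25]; [:: 23; 24; 26; 27]; [:: 27; 28; 29; 25]; [:: 26; 28; 29; 25]; [:: 26; 27; 29; 30]; [:: 26; 27; 28; 30]; [:: 28; 29; 31; 32]; [:: 32; 33; 34; 30]; [:: 31; 33; 34; 30]; [:: 31; 32; 34; 35]; [:: 31;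 32; 33; 35]; [:: 33; 34; 36; 37]; [:: 38; 39; 37; 35]; [:: 36; 40; 41; 35]; [:: 40; 41; 39; 36]; [:: 38; 40; 41; 36]; [:: 38; 41; 39; 37]; [:: 38; 40; 39; 37]].
Definition xs42 : seq Z := [:: (102); (100); (100); (100); (93); (99); (87); (87); (82); (82); (72); (61); (61); (54); (54); (41); (26); (26); (19); (19); (4); (-12); (-12); (-19); (-19); (-34); (-48); (-48); (-55); (-55); (-67); (-78); (-78); (-82); (-82); (-90); (-97); (-97); (-99); (-99); (-99); (-99)].
Lemma chk42 : check 42 tbl42 xs42 59.
Proof. rewrite /check /TZ /SZ /QZ unlock; vm_compute; reflexivity. Qed.

Definition tbl43 : seq (seq nat) := [:: [:: 1; 2; 3; 4]; [:: 0; 2; 3; 5]; [:: 0; 1; 3; 5]; [:: 0; 1; 2; 4]; [:: 0; 3; 5; 6]; [:: 4; 1; 2; 6]; [:: 4; 5; 7; 8]; [:: 8; 9; 10; 6]; [:: 7; 9; 10; 6]; [:: 7; 8; 10; 11]; [:: 7; 8; 9; 11]; [:: 9; 10; 12; 13]; [:: 13; 14; 15; 11]; [:: 12; 14; 15; 11]; [:: 12; 13; 15; 16]; [:: 12; 13; 14; 16]; [:: 14; 15; 17; 18]; [:: 18; 19; 20; 16]; [:: 17; 19; 20; 16]; [:: 17; 18; 20; 21]; [:: 17; 18; 19; 21]; [:: 19; 20; 22; 23]; [:: 23; 24; 25; 21]; [:: 22; 24; 25; 21]; [:: 22; 23; 25; 26]; [:: 22; 23; 24; 26]; [:: 24; 25;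 27; 28]; [:: 28; 29; 30; 26]; [:: 27; 29; 30; 26]; [:: 27; 28; 30; 31]; [:: 27; 28; 29; 31]; [:: 29; 30; 32; 33]; [:: 33; 34; 35; 31]; [:: 32; 34; 35; 31]; [:: 32; 33; 35; 36]; [:: 32; 33; 34; 36]; [:: 34; 35; 37; 38]; [:: 39; 40; 38; 36]; [:: 37; 41; 42; 36]; [:: 41; 42; 40; 37]; [:: 39; 41; 42; 37]; [:: 39; 42; 40; 38]; [:: 39; 41; 40; 38]].
Definition xs43 : seq Z := [:: (100); (100); (100); (100); (98); (98); (91); (84); (84); (80); (80); (69); (57); (57); (51); (51); (37); (22); (22); (15); (15); (0); (-15); (-15); (-22); (-22); (-37); (-51); (-51); (-57); (-57); (-69); (-80); (-80); (-84); (-84); (-91); (-98); (-98); (-100); (-100); (-100); (-100)].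
Lemma chk43 : check 43 tbl43 xs43 59.
Proof. rewrite /check /TZ /SZ /QZ unlock; vm_compute; reflexivity. Qed.

Definition tbl44 : seq (seq nat) := [:: [:: 1; 2; 3; 5]; [:: 0; 2; 3; 4]; [:: 0; 1; 3; 4]; [:: 0; 1; 2; 4]; [:: 1; 2; 3; 5]; [:: 0; 4; 6; 7]; [:: 5; 7; 8; 9]; [:: 5; 6; 8; 9]; [:: 6; 7; 9; 10]; [:: 6; 7; 8; 10]; [:: 8; 9; 11; 12]; [:: 10; 12; 13; 14]; [:: 10; 11; 13; 14]; [:: 11; 12; 14; 16]; [:: 11; 12; 13; 15]; [:: 14; 16; 17; 18]; [:: 13; 15; 17; 19]; [:: 15; 16; 18; 20]; [:: 15; 17; 19; 21]; [:: 16; 18; 20; 22]; [:: 17; 19; 21; 23]; [:: 18; 20; 22; 24]; [:: 25; 23; 21; 19]; [:: 26; 24; 22; 20]; [:: 27; 25; 23; 21]; [:: 28; 26; 24; 22]; [:: 28; 27; 25; 23]; [:: 30; 28; 26; 24]; [:: 29; 27; 26; 25]; [:: 32; 31; 30; 28]; [:: 32; 31; 29; 27]; [:: 33; 32; 30; 29]; [:: 33; 31; 30; 29]; [:: 35; 34; 32; 31]; [:: 37; 36; 35; 33]; [:: 37; 36; 34; 33]; [:: 38; 37; 35; 34]; [:: 38; 36; 35; 34]; [:: 43; 39; 37; 36]; [:: 42; 41; 40; 38]; [:: 43; 42; 41; 39]; [:: 43; 42; 40; 39]; [:: 43; 41; 40; 39]; [:: 42; 41; 40; 38]].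
Definition xs44 : seq Z := [:: (98); (100); (100); (100); (98); (88); (76); (76); (68); (68); (50); (31); (31); (21); (21); (0); (0); (0); (0); (0); (0); (0); (0); (0); (0); (0); (0); (0); (0); (-21); (-21); (-31); (-31); (-50); (-68); (-68); (-76); (-76); (-88); (-98); (-100); (-100); (-100); (-98)].
Lemma chk44 : check 44 tbl44 xs44 59.
Proof. rewrite /check /TZ /SZ /QZ unlock; vm_compute; reflexivity. Qed.

Definition tbl45 : seq (seq nat) := [:: [:: 1; 2; 3; 5]; [:: 0; 2; 3; 4]; [:: 0; 1; 3; 4]; [:: 0; 1; 2; 4]; [:: 1; 2; 3; 5]; [:: 0; 4; 6; 7]; [:: 5; 7; 8; 9]; [:: 5; 6; 8; 9]; [:: 6; 7; 9; 10]; [:: 6; 7; 8; 10]; [:: 8; 9; 11; 12]; [:: 10; 12; 13; 14]; [:: 10; 11; 13; 14]; [:: 11; 12; 14; 16]; [:: 11; 12; 13; 15]; [:: 14; 16; 17; 18]; [:: 13; 15; 17; 19]; [:: 15; 16; 18; 20]; [:: 15; 17; 19; 21]; [:: 16; 18; 20; 22]; [:: 17; 19; 21; 23]; [:: 18; 20; 22; 24]; [:: 19; 21; 23; 25]; [:: 26; 24; 22; 20]; [:: 27; 25; 23; 21]; [:: 28; 26; 24; 22]; [:: 29; 27; 25; 23]; [:: 29; 28; 26; 24]; [:: 31; 29; 27; 25]; [:: 30; 28; 27; 26]; [:: 33; 32; 31; 29]; [:: 33; 32; 30; 28]; [:: 34; 33; 31; 30]; [:: 34; 32; 31; 30]; [::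 36; 35; 33; 32]; [:: 38; 37; 36; 34]; [:: 38; 37; 35; 34]; [:: 39; 38; 36; 35]; [:: 39; 37; 36; 35]; [:: 44; 40; 38; 37]; [:: 43; 42; 41; 39]; [:: 44; 43; 42; 40]; [:: 44; 43; 41; 40]; [:: 44; 42; 41; 40]; [:: 43; 42; 41; 39]].
Definition xs45 : seq Z := [:: (98); (100); (100); (100); (98); (88); (76); (76); (68); (68); (50); (31); (31); (21); (21); (0); (0); (0); (0); (0); (0); (0); (0); (0); (0); (0); (0); (0); (0); (0); (-21); (-21); (-31); (-31); (-50); (-68); (-68); (-76); (-76); (-88); (-98); (-100); (-100); (-100); (-98)].
Lemma chk45 : check 45 tbl45 xs45 59.
Proof. rewrite /check /TZ /SZ /QZ unlock; vm_compute; reflexivity. Qed.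

Definition tbl46 : seq (seq nat) := [:: [:: 1; 2; 3; 5]; [:: 0; 2; 3; 4]; [:: 0; 1; 3; 4]; [:: 0; 1; 2; 4]; [:: 1; 2; 3; 5]; [:: 0; 4; 6; 7]; [:: 5; 7; 8; 9]; [:: 5; 6; 8; 9]; [:: 6; 7; 9; 10]; [:: 6; 7; 8; 10]; [:: 8; 9; 11; 12]; [:: 10; 12; 13; 14]; [:: 10; 11; 13; 14]; [:: 11; 12; 14; 16]; [:: 11; 12; 13; 15]; [:: 14; 16; 17; 18]; [:: 13; 15; 17; 19]; [:: 15; 16; 18; 20]; [:: 15; 17; 19; 21]; [:: 16; 18; 20; 22]; [:: 17; 19; 21; 23]; [:: 18; 20; 22; 24]; [:: 19; 21; 23; 25]; [:: 26; 24; 22; 20]; [:: 27; 25; 23; 21]; [:: 28; 26; 24; 22]; [:: 29; 27; 25; 23]; [:: 30; 28; 26; 24]; [:: 30; 29; 27; 25]; [:: 32; 30; 28; 26]; [:: 31; 29; 28; 27]; [:: 34; 33; 32; 30]; [:: 34; 33; 31; 29]; [:: 35; 34; 32; 31]; [:: 35; 33; 32; 31]; [:: 37; 36; 34; 33]; [:: 39; 38; 37; 35]; [:: 39; 38; 36; 35]; [:: 40; 39; 37; 36]; [:: 40; 38; 37; 36]; [:: 45; 41; 39; 38]; [:: 44; 43; 42; 40]; [:: 45; 44; 43; 41]; [:: 45; 44; 42; 41]; [:: 45; 43; 42; 41]; [:: 44; 43; 42; 40]].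
Definition xs46 : seq Z := [:: (98); (100); (100); (100); (98); (88); (76); (76); (68); (68); (50); (31); (31); (21); (21); (0); (0); (0); (0); (0); (0); (0); (0); (0); (0); (0); (0); (0); (0); (0); (0); (-21); (-21); (-31); (-31); (-50); (-68); (-68); (-76); (-76); (-88); (-98); (-100); (-100); (-100); (-98)].
Lemma chk46 : check 46 tbl46 xs46 59.
Proof. rewrite /check /TZ /SZ /QZ unlock; vm_compute; reflexivity. Qed.

Definition tbl47 : seq (seq nat) := [:: [:: 1; 2; 3; 5]; [:: 0; 2; 3; 4]; [:: 0; 1; 3; 4]; [:: 0; 1; 2; 4]; [:: 1; 2; 3; 5]; [:: 0; 4; 6; 7]; [:: 5; 7; 8; 9]; [:: 5; 6; 8; 9]; [:: 6; 7; 9; 10]; [:: 6; 7; 8; 10]; [:: 8; 9; 11; 12]; [:: 10; 12; 13; 14]; [:: 10; 11; 13; 14]; [:: 11; 12; 14; 16]; [:: 11; 12; 13; 15]; [:: 14; 16; 17; 18]; [:: 13; 15; 17; 19]; [:: 15; 16; 18; 20]; [:: 15; 17; 19; 21]; [:: 16; 18; 20; 22]; [:: 17; 19; 21; 23]; [:: 18; 20; 22; 24]; [:: 19; 21; 23; 25]; [:: 20; 22; 24; 26]; [:: 27; 25; 23; 21]; [:: 28; 26; 24; 22]; [:: 29; 27; 25; 23]; [:: 30; 28; 26; 24]; [:: 31; 29; 27; 25]; [:: 31; 30; 28; 26]; [:: 33; 31; 29; 27]; [:: 32; 30; 29; 28]; [:: 35; 34; 33; 31]; [:: 35; 34; 32;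 30]; [:: 36; 35; 33; 32]; [:: 36; 34; 33; 32]; [:: 38; 37; 35; 34]; [:: 40; 39; 38; 36]; [:: 40; 39; 37; 36]; [:: 41; 40; 38; 37]; [:: 41; 39; 38; 37]; [:: 46; 42; 40; 39]; [:: 45; 44; 43; 41]; [:: 46; 45; 44; 42]; [:: 46; 45; 43; 42]; [:: 46; 44; 43; 42]; [:: 45; 44; 43; 41]].
Definition xs47 : seq Z := [:: (98); (100); (100); (100); (98); (88); (76); (76); (68); (68); (50); (31); (31); (21); (21); (0); (0); (0); (0); (0); (0); (0); (0); (0); (0); (0); (0); (0); (0); (0); (0); (0); (-21); (-21); (-31); (-31); (-50); (-68); (-68); (-76); (-76); (-88); (-98); (-100); (-100); (-100); (-98)].
Lemma chk47 : check 47 tbl47 xs47 59.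
Proof. rewrite /check /TZ /SZ /QZ unlock; vm_compute; reflexivity. Qed.

Definition tbl48 : seq (seq nat) := [:: [:: 1; 2; 3; 5]; [:: 0; 2; 3; 4]; [:: 0; 1; 3; 4]; [:: 0; 1; 2; 4]; [:: 1; 2; 3; 5]; [:: 0; 4; 6; 7]; [:: 5; 7; 8; 9]; [:: 5; 6; 8; 9]; [:: 6; 7; 9; 10]; [:: 6; 7; 8; 10]; [:: 8; 9; 11; 12]; [:: 10; 12; 13; 14]; [:: 10; 11; 13; 14]; [:: 11; 12; 14; 16]; [:: 11; 12; 13; 15]; [:: 14; 16; 17; 18]; [:: 13; 15; 17; 19]; [:: 15; 16; 18; 20]; [:: 15; 17; 19; 21]; [:: 16; 18; 20; 22]; [:: 17; 19; 21; 23]; [:: 18; 20; 22; 24]; [:: 19; 21; 23; 25]; [:: 20; 22; 24; 26]; [:: 27; 25; 23; 21]; [:: 28; 26; 24; 22]; [:: 29; 27; 25; 23]; [:: 30; 28; 26; 24]; [:: 31; 29; 27; 25]; [:: 32; 30; 28; 26]; [:: 32; 31; 29; 27]; [:: 34; 32; 30; 28]; [:: 33; 31; 30; 29]; [:: 36; 35; 34; 32]; [:: 36; 35; 33; 31]; [:: 37; 36; 34; 33]; [:: 37; 35; 34; 33]; [:: 39; 38; 36; 35]; [:: 41; 40; 39; 37]; [:: 41; 40; 38; 37]; [:: 42; 41; 39; 38]; [:: 42; 40; 39; 38]; [:: 47; 43; 41; 40]; [:: 46; 45; 44; 42]; [:: 47; 46; 45; 43]; [:: 47; 46; 44; 43];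 [:: 47; 45; 44; 43]; [:: 46; 45; 44; 42]].
Definition xs48 : seq Z := [:: (98); (100); (100); (100); (98); (88); (76); (76); (68); (68); (50); (31); (31); (21); (21); (0); (0); (0); (0); (0); (0); (0); (0); (0); (0); (0); (0); (0); (0); (0); (0); (0); (0); (-21); (-21); (-31); (-31); (-50); (-68); (-68); (-76); (-76); (-88); (-98); (-100); (-100); (-100); (-98)].
Lemma chk48 : check 48 tbl48 xs48 59.
Proof. rewrite /check /TZ /SZ /QZ unlock; vm_compute; reflexivity. Qed.

Definition tbl49 : seq (seq nat) := [:: [:: 1; 2; 3; 5]; [:: 0; 2; 3; 4]; [:: 0; 1; 3; 4]; [:: 0; 1; 2; 4]; [:: 1; 2; 3; 5]; [:: 0; 4; 6; 7]; [:: 5; 7; 8; 9]; [:: 5; 6; 8; 9]; [:: 6; 7; 9; 10]; [:: 6; 7; 8; 10]; [:: 8; 9; 11; 12]; [:: 10; 12; 13; 14]; [:: 10; 11; 13; 14]; [:: 11; 12; 14; 16]; [:: 11; 12; 13; 15]; [:: 14; 16; 17; 18]; [:: 13; 15; 17; 19]; [:: 15; 16; 18; 20]; [:: 15; 17; 19; 21]; [:: 16; 18; 20; 22]; [:: 17; 19; 21; 23]; [:: 18; 20; 22; 24]; [:: 19; 21; 23; 25]; [:: 20; 22; 24; 26]; [:: 21; 23; 25; 27]; [:: 28; 26; 24; 22]; [:: 29; 27; 25; 23]; [:: 30; 28; 26; 24]; [:: 31; 29; 27; 25]; [:: 32; 30; 28; 26]; [:: 33; 31; 29; 27]; [:: 33;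 32; 30; 28]; [:: 35; 33; 31; 29]; [:: 34; 32; 31; 30]; [:: 37; 36; 35; 33]; [:: 37; 36; 34; 32]; [:: 38; 37; 35; 34]; [:: 38; 36; 35; 34]; [:: 40; 39; 37; 36]; [:: 42; 41; 40; 38]; [:: 42; 41; 39; 38]; [:: 43; 42; 40; 39]; [:: 43; 41; 40; 39]; [:: 48; 44; 42; 41]; [:: 47; 46; 45; 43]; [:: 48; 47; 46; 44]; [:: 48; 47; 45; 44]; [:: 48; 46; 45; 44]; [:: 47; 46; 45; 43]].
Definition xs49 : seq Z := [:: (98); (100); (100); (100); (98); (88); (76); (76); (68); (68); (50); (31); (31); (21); (21); (0); (0); (0); (0); (0); (0); (0); (0); (0); (0); (0); (0); (0); (0); (0); (0); (0); (0); (0); (-21); (-21); (-31); (-31); (-50); (-68); (-68); (-76); (-76); (-88); (-98); (-100); (-100); (-100); (-98)].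
Lemma chk49 : check 49 tbl49 xs49 59.
Proof. rewrite /check /TZ /SZ /QZ unlock; vm_compute; reflexivity. Qed.


Definition bn (n : nat) : nat :=
  if (n <= 12)%N then 355 else if (n <= 17)%N then 268 else if (n <= 20)%N then 129
  else if (n <= 25)%N then 91 else 59.

Lemma small_cases (R : rcfType) n (mu : R) : (11 <= n)%N -> (n < 50)%N ->
  (forall (e' : rel 'I_n) (mu' : R), connected_quartic e' -> alg_conn e' mu' -> mu <= mu') ->
  mu < (bn n)%:R / 1000%:R.
Proof.
move=> h1 h2 hm.
case: n => [//|n] in h1 h2 hm *.
case: n => [//|n] in h1 h2 hm *.
case: n => [//|n] in h1 h2 hm *.
case: n => [//|n] in h1 h2 hm *.
case: n => [//|n] in h1 h2 hm *.
case: n => [//|n] in h1 h2 hm *.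
case: n => [//|n] in h1 h2 hm *.
case: n => [//|n] in h1 h2 hm *.
case: n => [//|n] in h1 h2 hm *.
case: n => [//|n] in h1 h2 hm *.
case: n => [//|n] in h1 h2 hm *.
case: n => [|n] in h1 h2 hm *; first exact: (concrete hm chk11).
case: n => [|n] in h1 h2 hm *; first exact: (concrete hm chk12).
case: n => [|n] in h1 h2 hm *; first exact: (concrete hm chk13).
case: n => [|n] in h1 h2 hm *; first exact: (concrete hm chk14).
case: n => [|n] in h1 h2 hm *; first exact: (concrete hm chk15).
case: n => [|n] in h1 h2 hm *; first exact: (concrete hm chk16).
case: n => [|n] in h1 h2 hm *; first exact: (concrete hm chk17).
case: n => [|n] in h1 h2 hm *; first exact: (concrete hm chk18).
case: n => [|n] in h1 h2 hm *; first exact: (concrete hm chk19).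
case: n => [|n] in h1 h2 hm *; first exact: (concrete hm chk20).
case: n => [|n] in h1 h2 hm *; first exact: (concrete hm chk21).
case: n => [|n] in h1 h2 hm *; first exact: (concrete hm chk22).
case: n => [|n] in h1 h2 hm *; first exact: (concrete hm chk23).
case: n => [|n] in h1 h2 hm *; first exact: (concrete hm chk24).
case: n => [|n] in h1 h2 hm *; first exact: (concrete hm chk25).
case: n => [|n] in h1 h2 hm *; first exact: (concrete hm chk26).
case: n => [|n] in h1 h2 hm *; first exact: (concrete hm chk27).
case: n => [|n] in h1 h2 hm *; first exact: (concrete hm chk28).
case: n => [|n] in h1 h2 hm *; first exact: (concrete hm chk29).
case: n => [|n] in h1 h2 hm *; first exact: (concrete hm chk30).
case: n => [|n] in h1 h2 hm *; first exact: (concrete hm chk31).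
case: n => [|n] in h1 h2 hm *; first exact: (concrete hm chk32).
case: n => [|n] in h1 h2 hm *; first exact: (concrete hm chk33).
case: n => [|n] in h1 h2 hm *; first exact: (concrete hm chk34).
case: n => [|n] in h1 h2 hm *; first exact: (concrete hm chk35).
case: n => [|n] in h1 h2 hm *; first exact: (concrete hm chk36).
case: n => [|n] in h1 h2 hm *; first exact: (concrete hm chk37).
case: n => [|n] in h1 h2 hm *; first exact: (concrete hm chk38).
case: n => [|n] in h1 h2 hm *; first exact: (concrete hm chk39).
case: n => [|n] in h1 h2 hm *; first exact: (concrete hm chk40).
case: n => [|n] in h1 h2 hm *; first exact: (concrete hm chk41).
case: n => [|n] in h1 h2 hm *; first exact: (concrete hm chk42).
case: n => [|n] in h1 h2 hm *; first exact: (concrete hm chk43).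
case: n => [|n] in h1 h2 hm *; first exact: (concrete hm chk44).
case: n => [|n] in h1 h2 hm *; first exact: (concrete hm chk45).
case: n => [|n] in h1 h2 hm *; first exact: (concrete hm chk46).
case: n => [|n] in h1 h2 hm *; first exact: (concrete hm chk47).
case: n => [|n] in h1 h2 hm *; first exact: (concrete hm chk48).
case: n => [|n] in h1 h2 hm *; first exact: (concrete hm chk49).
by [].
Qed.

Unset Implicit Arguments.

Theorem lemma3 (R : rcfType) (n : nat) (e : rel 'I_n) (mu : R) :
  (11 <= n)%N ->
  connected_quartic e ->
  alg_conn e mu ->
  (forall (e' : rel 'I_n) (mu' : R),
      connected_quartic e' -> alg_conn e' mu' -> mu <= mu') ->
  [/\ ((11 <= n)%N -> mu < 355%:R / 1000%:R),
      ((13 <= n)%N -> mu < 268%:R / 1000%:R),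
      ((18 <= n)%N -> mu < 129%:R / 1000%:R),
      ((21 <= n)%N -> mu < 91%:R / 1000%:R)
    & ((26 <= n)%N -> mu < 59%:R / 1000%:R)].
Proof.
move=> h11 _ _ hm.
have key : mu < (bn n)%:R / 1000%:R.
  case: (ltnP n 50) => h50; first exact: small_cases.
  have -> : bn n = 59%N by rewrite /bn; repeat case: ifP => ?; lia.
  exact: (gen_case h50 hm).
have mono : forall b : nat, (bn n <= b)%N -> mu < b%:R / 1000%:R.
  move=> b hb; apply: lt_le_trans key _.
  by apply: ler_wpM2r; [rewrite invr_ge0 ler0n | rewrite ler_nat].
split => h; apply: mono; rewrite /bn; repeat case: ifP => ?; lia.
Qed.
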